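(* Let $f$ be a complex-valued function that is holomorphic on an open neighborhood of the closed upper half-plane $\{x+yi : y\ge 0\}$ except at finitely many isolated singular points, each of which has strictly positive imaginary part. Suppose that: (i) for all real $x$ with $|x|$ sufficiently large, the improper integral $\int_{0}^{\infty} f(x+yi)\,dy$ converges, and $\int_{0}^{\infty} f(x+yi)\,dy \to 0$ as $x\to+\infty$ and as $x\to-\infty$; (ii) for each bounded interval $I\subset\mathbb{R}$, $\int_{I} f(x+yi)\,dx \to 0$ as $y\to\infty$. Then the improper integral $\int_{-\infty}^{\infty} f(x)\,dx$ (that is, $\lim_{A,B\to+\infty}\int_{-A}^{B} f(x)\,dx$) exists and equals $2\pi i$ times the sum of the residues of $f$ at its singular points in the upper half-plane.
   Context: The residue of $f$ at an isolated singularity $z_0$ is the coefficient of $(z-z_0)^{-1}$ in the Laurent expansion of $f$ about $z_0$. *)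

(* Defs.v *)
From Stdlib Require Import Reals ZArith List ClassicalEpsilon.
From Coquelicot Require Import Coquelicot.
Open Scope R_scope.

Fixpoint Cpown (z : C) (n : nat) : C :=
  match n with O => RtoC 1 | S m => Cmult z (Cpown z m) end.

Definition holo_at (f : C -> C) (z : C) : Prop :=
  @ex_derive C_AbsRing C_NormedModule f z.

(* a : Z -> C are the coefficients of a Laurent expansion of f about z0,
   valid on some punctured disc 0 < |z - z0| < r:
   f z = sum_{n>=0} a_n (z-z0)^n + sum_{n>=1} a_{-n} (z-z0)^{-n}. *)
Definition is_laurent_expansion (f : C -> C) (z0 : C) (a : Z -> C) : Prop :=
  exists r : R, 0 < r /\
    forall z : C, 0 < Cmod (Cminus z z0) < r ->
      exists p q : C,
        @is_series R_AbsRing C_R_NormedModule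
          (fun n : nat => Cmult (a (Z.of_nat n)) (Cpown (Cminus z z0) n)) p /\
        @is_series R_AbsRing C_R_NormedModule
          (fun n : nat => Cmult (a (- Z.of_nat (S n))%Z)
                                (Cinv (Cpown (Cminus z z0) (S n)))) q /\
        f z = Cplus p q.

(* The residue of f at z0: the coefficient of (z - z0)^{-1} in the Laurent
   expansion of f about z0 (Laurent coefficients are unique, so this is
   well defined whenever z0 is an isolated singularity). *)
Definition residue (f : C -> C) (z0 : C) : C :=
  epsilon (inhabits (RtoC 0))
    (fun c => exists a : Z -> C, is_laurent_expansion f z0 a /\ a (-1)%Z = c).

Definition Csum (l : list C) : C := fold_right Cplus (RtoC 0) l.

(* Main.v *)
Require Import Defs.
From Stdlib Require Import Reals ZArith List ClassicalEpsilon Lra Lia.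
From Coquelicot Require Import Coquelicot.
Open Scope R_scope.

Lemma normC (x : C) : @norm R_AbsRing C_R_NormedModule x = Cmod x.
Proof.
  unfold norm; simpl; unfold prod_norm, Cmod; simpl.
  unfold norm; simpl; unfold abs; simpl.
  rewrite !Rmult_1_r, <- !Rabs_mult, !Rabs_right; auto; apply Rle_ge, Rle_0_sqr.
Qed.

Lemma is_RInt_Cmult (g : R -> C) a b (l k : C) :
  @is_RInt C_R_NormedModule g a b l ->
  @is_RInt C_R_NormedModule (fun t => Cmult k (g t)) a b (Cmult k l).
Proof.
  intros H.
  destruct k as [k1 k2]. destruct l as [l1 l2].
  assert (H1 := is_RInt_fct_extend_fst _ _ _ _ H).
  assert (H2 := is_RInt_fct_extend_snd _ _ _ _ H). simpl in H1, H2.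
  apply (is_RInt_fct_extend_pair (U:=R_NormedModule) (V:=R_NormedModule)); simpl.
  - eapply is_RInt_ext; [|apply (is_RInt_minus _ _ _ _ _ _ (is_RInt_scal _ _ _ k1 _ H1) (is_RInt_scal _ _ _ k2 _ H2))].
    intros; simpl. reflexivity.
  - eapply is_RInt_ext; [|apply (is_RInt_plus _ _ _ _ _ _ (is_RInt_scal _ _ _ k1 _ H2) (is_RInt_scal _ _ _ k2 _ H1))].
    intros; simpl. reflexivity.
Qed.

Definition Ccont (f : C -> C) (z : C) : Prop :=
  forall eps : R, 0 < eps -> exists d : R, 0 < d /\
    forall w : C, Cmod (Cminus w z) < d -> Cmod (Cminus (f w) (f z)) < eps.

Lemma Cmod_fst (x : C) : Rabs (fst x) <= Cmod x.
Proof. eapply Rle_trans; [apply Rmax_l|apply Rmax_Cmod]. Qed.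
Lemma Cmod_snd (x : C) : Rabs (snd x) <= Cmod x.
Proof. eapply Rle_trans; [apply Rmax_r|apply Rmax_Cmod]. Qed.

Lemma ballC_of_Cmod (x y : C) (e : R) :
  Cmod (Cminus y x) < e -> @ball C_UniformSpace x e y.
Proof.
  intros H. split; simpl; unfold AbsRing_ball, abs, minus, plus, opp; simpl.
  - eapply Rle_lt_trans; [|apply H]. apply (Cmod_fst (Cminus y x)).
  - eapply Rle_lt_trans; [|apply H]. apply (Cmod_snd (Cminus y x)).
Qed.

Lemma ballCR_of_Cmod (x y : C) (e : R) :
  Cmod (Cminus y x) < e -> @ball C_R_NormedModule x e y.
Proof. apply ballC_of_Cmod. Qed.

Lemma holo_eps (f : C -> C) (z : C) :
  holo_at f z -> exists l : C, forall eps : R, 0 < eps -> exists d : R, 0 < d /\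
    forall w : C, Cmod (Cminus w z) < d ->
      Cmod (Cminus (Cminus (f w) (f z)) (Cmult l (Cminus w z))) <= eps * Cmod (Cminus w z).
Proof.
  intros [l Hl]. exists l. intros eps Heps.
  destruct Hl as [_ Hd].
  specialize (Hd z (fun P H => H)).
  destruct (Hd (mkposreal eps Heps)) as [e He].
  exists e. split; [apply cond_pos|].
  intros w Hw. specialize (He w Hw).
  simpl in He. unfold norm, minus, plus, opp, scal in He; simpl in He.
  replace (Cmult l (Cminus w z)) with (Cmult (Cminus w z) l) by ring.
  exact He.
Qed.

Lemma holo_cont (f : C -> C) (z : C) : holo_at f z -> Ccont f z.
Proof.
  intros H eps Heps.
  destruct (holo_eps f z H) as [l Hl].
  destruct (Hl 1 Rlt_0_1) as [d [Hd Hw]].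
  set (e := Rmin d (eps / (Cmod l + 2))).
  assert (Hl0 := Cmod_ge_0 l).
  assert (He : 0 < e). { unfold e; apply Rmin_glb_lt; auto. apply Rdiv_lt_0_compat; lra. }
  exists e. split; auto. intros w Hwz.
  assert (Hwd : Cmod (Cminus w z) < d) by (eapply Rlt_le_trans; [apply Hwz|apply Rmin_l]).
  specialize (Hw w Hwd).
  replace (Cminus (f w) (f z)) with
    (Cplus (Cminus (Cminus (f w) (f z)) (Cmult l (Cminus w z))) (Cmult l (Cminus w z))) by ring.
  eapply Rle_lt_trans; [apply Cmod_triangle|]. rewrite Cmod_mult.
  assert (Hc := Cmod_ge_0 (Cminus w z)).
  assert (Hwe : Cmod (Cminus w z) < eps / (Cmod l + 2)) by (eapply Rlt_le_trans; [apply Hwz|apply Rmin_r]).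
  assert (Cmod (Cminus w z) * (Cmod l + 2) < eps).
  { apply (Rmult_lt_compat_r (Cmod l + 2)) in Hwe; [|lra].
    unfold Rdiv in Hwe. rewrite Rmult_assoc, Rinv_l in Hwe by lra. lra. }
  nra.
Qed.

Lemma cont_h (f : C -> C) (x y : R) :
  Ccont f (x, y) -> @continuous R_UniformSpace C_R_NormedModule (fun t => f (t, y)) x.
Proof.
  intros H. apply filterlim_locally. intros eps.
  destruct (H eps (cond_pos eps)) as [d [Hd Hw]].
  exists (mkposreal d Hd). intros t Ht. apply ballCR_of_Cmod. apply Hw.
  change (Rabs (t - x) < d) in Ht.
  replace (Cminus (t, y) (x, y)) with (RtoC (t - x)).
  rewrite Cmod_R; exact Ht.
  apply injective_projections; simpl; ring.
Qed.

Lemma cont_v (f : C -> C) (x y : R) :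
  Ccont f (x, y) -> @continuous R_UniformSpace C_R_NormedModule (fun t => f (x, t)) y.
Proof.
  intros H. apply filterlim_locally. intros eps.
  destruct (H eps (cond_pos eps)) as [d [Hd Hw]].
  exists (mkposreal d Hd). intros t Ht. apply ballCR_of_Cmod. apply Hw.
  change (Rabs (t - y) < d) in Ht.
  replace (Cminus (x, t) (x, y)) with (Cmult Ci (RtoC (t - y))).
  rewrite Cmod_mult, Cmod_R, Cmod_Ci, Rmult_1_l; exact Ht.
  apply injective_projections; simpl; ring.
Qed.

Definition IH (f : C -> C) (a b y : R) : C :=
  @RInt C_R_CompleteNormedModule (fun x => f (x, y)) a b.
Definition IV (f : C -> C) (x c d : R) : C :=
  @RInt C_R_CompleteNormedModule (fun y => f (x, y)) c d.
Definition rect (f : C -> C) (a b c d : R) : C :=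
  Cminus (Cminus (Cplus (IH f a b c) (Cmult Ci (IV f b c d))) (IH f a b d))
         (Cmult Ci (IV f a c d)).

Definition rok (f : C -> C) (a b c d : R) : Prop :=
  @ex_RInt C_R_NormedModule (fun x => f (x, c)) a b /\
  @ex_RInt C_R_NormedModule (fun x => f (x, d)) a b /\
  @ex_RInt C_R_NormedModule (fun y => f (a, y)) c d /\
  @ex_RInt C_R_NormedModule (fun y => f (b, y)) c d.

Definition contB (f : C -> C) (a b c d : R) : Prop :=
  (forall x, a <= x <= b -> Ccont f (x, c) /\ Ccont f (x, d)) /\
  (forall y, c <= y <= d -> Ccont f (a, y) /\ Ccont f (b, y)).

Definition contR (f : C -> C) (a b c d : R) : Prop :=
  forall x y, a <= x <= b -> c <= y <= d -> Ccont f (x, y).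

Definition bdd (f : C -> C) (a b c d M : R) : Prop :=
  (forall x, a <= x <= b -> Cmod (f (x, c)) <= M /\ Cmod (f (x, d)) <= M) /\
  (forall y, c <= y <= d -> Cmod (f (a, y)) <= M /\ Cmod (f (b, y)) <= M).

Lemma exh (f : C -> C) a b y : a <= b -> (forall x, a <= x <= b -> Ccont f (x, y)) ->
  @ex_RInt C_R_NormedModule (fun x => f (x, y)) a b.
Proof.
  intros Hab H. apply (ex_RInt_continuous (V:=C_R_CompleteNormedModule)).
  intros z Hz. rewrite Rmin_left, Rmax_right in Hz by lra. apply cont_h, H, Hz.
Qed.

Lemma exv (f : C -> C) x c d : c <= d -> (forall y, c <= y <= d -> Ccont f (x, y)) ->
  @ex_RInt C_R_NormedModule (fun y => f (x, y)) c d.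
Proof.
  intros Hab H. apply (ex_RInt_continuous (V:=C_R_CompleteNormedModule)).
  intros z Hz. rewrite Rmin_left, Rmax_right in Hz by lra. apply cont_v, H, Hz.
Qed.

Lemma contB_rok f a b c d : a <= b -> c <= d -> contB f a b c d -> rok f a b c d.
Proof.
  intros Hab Hcd [H1 H2]. repeat split.
  - apply exh; auto; intros; apply H1; auto.
  - apply exh; auto; intros; apply H1; auto.
  - apply exv; auto; intros; apply H2; auto.
  - apply exv; auto; intros; apply H2; auto.
Qed.

Lemma contR_contB f a b c d : a <= b -> c <= d -> contR f a b c d -> contB f a b c d.
Proof.
  intros Hab Hcd H. split; intros; split; apply H; lra.
Qed.

Lemma contR_rok f a b c d : a <= b -> c <= d -> contR f a b c d -> rok f a b c d.
Proof. intros; apply contB_rok, contR_contB; auto. Qed.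

Lemma contR_sub f a b c d a' b' c' d' : a <= a' -> b' <= b -> c <= c' -> d' <= d ->
  contR f a b c d -> contR f a' b' c' d'.
Proof. intros ? ? ? ? H x y ? ?; apply H; lra. Qed.

Lemma Chasles_C (g : R -> C) a m b :
  @ex_RInt C_R_NormedModule g a m -> @ex_RInt C_R_NormedModule g m b ->
  @RInt C_R_CompleteNormedModule g a b =
  Cplus (@RInt C_R_CompleteNormedModule g a m) (@RInt C_R_CompleteNormedModule g m b).
Proof.
  intros H1 H2. symmetry. apply (RInt_Chasles (V:=C_R_CompleteNormedModule)); auto.
Qed.

Lemma rect_splitx f a m b c d : a <= m <= b -> c <= d -> contR f a b c d ->
  rect f a b c d = Cplus (rect f a m c d) (rect f m b c d).
Proof.
  intros Hm Hcd H. unfold rect, IH.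
  rewrite (Chasles_C _ a m b), (Chasles_C (fun x => f (x, d)) a m b).
  - ring.
  - apply exh; [lra|]; intros; apply H; lra.
  - apply exh; [lra|]; intros; apply H; lra.
  - apply exh; [lra|]; intros; apply H; lra.
  - apply exh; [lra|]; intros; apply H; lra.
Qed.

Lemma rect_splity f a b c m d : a <= b -> c <= m <= d -> contR f a b c d ->
  rect f a b c d = Cplus (rect f a b c m) (rect f a b m d).
Proof.
  intros Hab Hm H. unfold rect, IV.
  rewrite (Chasles_C _ c m d), (Chasles_C (fun y => f (a, y)) c m d).
  - ring.
  - apply exv; [lra|]; intros; apply H; lra.
  - apply exv; [lra|]; intros; apply H; lra.
  - apply exv; [lra|]; intros; apply H; lra.
  - apply exv; [lra|]; intros; apply H; lra.
Qed.

Lemma RInt_bound_C (g : R -> C) a b M : a <= b -> @ex_RInt C_R_NormedModule g a b ->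
  (forall x, a <= x <= b -> Cmod (g x) <= M) ->
  Cmod (@RInt C_R_CompleteNormedModule g a b) <= M * (b - a).
Proof.
  intros Hab Hex H. rewrite <- normC.
  apply (norm_RInt_le g (fun _ => M) a b _ (M * (b - a))); auto.
  - intros; rewrite normC; auto.
  - apply (RInt_correct (V:=C_R_CompleteNormedModule)); auto.
  - replace (M * (b - a)) with (scal (b - a) M) by (unfold scal; simpl; unfold mult; simpl; ring).
    apply (is_RInt_const (V:=R_NormedModule)).
Qed.

Lemma Cmod4 (x y z w : C) :
  Cmod (Cminus (Cminus (Cplus x y) z) w) <= Cmod x + Cmod y + Cmod z + Cmod w.
Proof.
  unfold Cminus.
  eapply Rle_trans; [apply Cmod_triangle|]. rewrite Cmod_opp.
  eapply Rplus_le_compat_r. eapply Rle_trans; [apply Cmod_triangle|]. rewrite Cmod_opp.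
  eapply Rplus_le_compat_r. apply Cmod_triangle.
Qed.

Lemma rect_bound f a b c d M : a <= b -> c <= d -> rok f a b c d -> bdd f a b c d M ->
  Cmod (rect f a b c d) <= 2 * M * (b - a) + 2 * M * (d - c).
Proof.
  intros Hab Hcd [h1 [h2 [h3 h4]]] [B1 B2]. unfold rect, IH, IV.
  eapply Rle_trans; [apply Cmod4|].
  rewrite !Cmod_mult, !Cmod_Ci, !Rmult_1_l.
  assert (Cmod (@RInt C_R_CompleteNormedModule (fun x => f (x, c)) a b) <= M * (b - a))
    by (apply RInt_bound_C; auto; intros; apply B1; auto).
  assert (Cmod (@RInt C_R_CompleteNormedModule (fun x => f (x, d)) a b) <= M * (b - a))
    by (apply RInt_bound_C; auto; intros; apply B1; auto).
  assert (Cmod (@RInt C_R_CompleteNormedModule (fun y => f (a, y)) c d) <= M * (d - c))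
    by (apply RInt_bound_C; auto; intros; apply B2; auto).
  assert (Cmod (@RInt C_R_CompleteNormedModule (fun y => f (b, y)) c d) <= M * (d - c))
    by (apply RInt_bound_C; auto; intros; apply B2; auto).
  lra.
Qed.

Lemma RInt_Cplus (g h : R -> C) a b :
  @ex_RInt C_R_NormedModule g a b -> @ex_RInt C_R_NormedModule h a b ->
  @RInt C_R_CompleteNormedModule (fun t => Cplus (g t) (h t)) a b =
  Cplus (@RInt C_R_CompleteNormedModule g a b) (@RInt C_R_CompleteNormedModule h a b).
Proof. intros; apply (RInt_plus (V:=C_R_CompleteNormedModule)); auto. Qed.

Lemma RInt_Cminus (g h : R -> C) a b :
  @ex_RInt C_R_NormedModule g a b -> @ex_RInt C_R_NormedModule h a b ->
  @RInt C_R_CompleteNormedModule (fun t => Cminus (g t) (h t)) a b =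
  Cminus (@RInt C_R_CompleteNormedModule g a b) (@RInt C_R_CompleteNormedModule h a b).
Proof. intros; apply (RInt_minus (V:=C_R_CompleteNormedModule)); auto. Qed.

Lemma RInt_Cmult (g : R -> C) k a b :
  @ex_RInt C_R_NormedModule g a b ->
  @RInt C_R_CompleteNormedModule (fun t => Cmult k (g t)) a b =
  Cmult k (@RInt C_R_CompleteNormedModule g a b).
Proof.
  intros H. apply (is_RInt_unique (V:=C_R_CompleteNormedModule)).
  apply is_RInt_Cmult. apply (RInt_correct (V:=C_R_CompleteNormedModule)); auto.
Qed.

Lemma ex_RInt_Cplus (g h : R -> C) a b :
  @ex_RInt C_R_NormedModule g a b -> @ex_RInt C_R_NormedModule h a b ->
  @ex_RInt C_R_NormedModule (fun t => Cplus (g t) (h t)) a b.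
Proof. intros; apply (ex_RInt_plus (V:=C_R_NormedModule)); auto. Qed.

Lemma ex_RInt_Cminus (g h : R -> C) a b :
  @ex_RInt C_R_NormedModule g a b -> @ex_RInt C_R_NormedModule h a b ->
  @ex_RInt C_R_NormedModule (fun t => Cminus (g t) (h t)) a b.
Proof. intros; apply (ex_RInt_minus (V:=C_R_NormedModule)); auto. Qed.

Lemma ex_RInt_Cmult (g : R -> C) k a b :
  @ex_RInt C_R_NormedModule g a b ->
  @ex_RInt C_R_NormedModule (fun t => Cmult k (g t)) a b.
Proof. intros [l H]. exists (Cmult k l). apply is_RInt_Cmult; auto. Qed.

Lemma rect_plus f g a b c d : rok f a b c d -> rok g a b c d ->
  rect (fun w => Cplus (f w) (g w)) a b c d = Cplus (rect f a b c d) (rect g a b c d).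
Proof.
  intros [f1 [f2 [f3 f4]]] [g1 [g2 [g3 g4]]]. unfold rect, IH, IV.
  rewrite !RInt_Cplus by auto. ring.
Qed.

Lemma rect_minus f g a b c d : rok f a b c d -> rok g a b c d ->
  rect (fun w => Cminus (f w) (g w)) a b c d = Cminus (rect f a b c d) (rect g a b c d).
Proof.
  intros [f1 [f2 [f3 f4]]] [g1 [g2 [g3 g4]]]. unfold rect, IH, IV.
  rewrite !RInt_Cminus by auto. ring.
Qed.

Lemma rect_mult f k a b c d : rok f a b c d ->
  rect (fun w => Cmult k (f w)) a b c d = Cmult k (rect f a b c d).
Proof.
  intros [f1 [f2 [f3 f4]]]. unfold rect, IH, IV.
  rewrite !RInt_Cmult by auto. ring.
Qed.

Lemma rok_plus f g a b c d : rok f a b c d -> rok g a b c d ->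
  rok (fun w => Cplus (f w) (g w)) a b c d.
Proof. intros [f1 [f2 [f3 f4]]] [g1 [g2 [g3 g4]]]; repeat split; apply ex_RInt_Cplus; auto. Qed.
Lemma rok_minus f g a b c d : rok f a b c d -> rok g a b c d ->
  rok (fun w => Cminus (f w) (g w)) a b c d.
Proof. intros [f1 [f2 [f3 f4]]] [g1 [g2 [g3 g4]]]; repeat split; apply ex_RInt_Cminus; auto. Qed.
Lemma rok_mult f k a b c d : rok f a b c d -> rok (fun w => Cmult k (f w)) a b c d.
Proof. intros [f1 [f2 [f3 f4]]]; repeat split; apply ex_RInt_Cmult; auto. Qed.

Lemma rect_ext f g a b c d : a <= b -> c <= d ->
  (forall x y, a <= x <= b -> c <= y <= d -> f (x, y) = g (x, y)) ->
  rect f a b c d = rect g a b c d.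
Proof.
  intros Hab Hcd H. unfold rect, IH, IV.
  rewrite (RInt_ext (V:=C_R_CompleteNormedModule) (fun x => f (x, c)) (fun x => g (x, c))),
          (RInt_ext (V:=C_R_CompleteNormedModule) (fun x => f (x, d)) (fun x => g (x, d))),
          (RInt_ext (V:=C_R_CompleteNormedModule) (fun y => f (a, y)) (fun y => g (a, y))),
          (RInt_ext (V:=C_R_CompleteNormedModule) (fun y => f (b, y)) (fun y => g (b, y))); auto;
  intros t Ht; rewrite ?Rmin_left, ?Rmax_right in Ht by lra; apply H; lra.
Qed.

Definition Cder (G : C -> C) (z l : C) : Prop :=
  forall eps : R, 0 < eps -> exists d : R, 0 < d /\
    forall w : C, Cmod (Cminus w z) < d ->
      Cmod (Cminus (Cminus (G w) (G z)) (Cmult l (Cminus w z))) <= eps * Cmod (Cminus w z).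

Lemma holo_Cder f z : holo_at f z -> exists l, Cder f z l.
Proof. apply holo_eps. Qed.

Lemma Cder_cont G z l : Cder G z l -> Ccont G z.
Proof.
  intros Hl eps Heps.
  destruct (Hl 1 Rlt_0_1) as [d [Hd Hw]].
  set (e := Rmin d (eps / (Cmod l + 2))).
  assert (Hl0 := Cmod_ge_0 l).
  assert (He : 0 < e). { unfold e; apply Rmin_glb_lt; auto. apply Rdiv_lt_0_compat; lra. }
  exists e. split; auto. intros w Hwz.
  assert (Hwd : Cmod (Cminus w z) < d) by (eapply Rlt_le_trans; [apply Hwz|apply Rmin_l]).
  specialize (Hw w Hwd).
  replace (Cminus (G w) (G z)) with
    (Cplus (Cminus (Cminus (G w) (G z)) (Cmult l (Cminus w z))) (Cmult l (Cminus w z))) by ring.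
  eapply Rle_lt_trans; [apply Cmod_triangle|]. rewrite Cmod_mult.
  assert (Hc := Cmod_ge_0 (Cminus w z)).
  assert (Hwe : Cmod (Cminus w z) < eps / (Cmod l + 2)) by (eapply Rlt_le_trans; [apply Hwz|apply Rmin_r]).
  assert (Cmod (Cminus w z) * (Cmod l + 2) < eps).
  { apply (Rmult_lt_compat_r (Cmod l + 2)) in Hwe; [|lra].
    unfold Rdiv in Hwe. rewrite Rmult_assoc, Rinv_l in Hwe by lra. lra. }
  nra.
Qed.

Lemma holo_Ccont f z : holo_at f z -> Ccont f z.
Proof. intros H; destruct (holo_Cder f z H) as [l Hl]; eapply Cder_cont; eauto. Qed.

Lemma Cder_ext G H z l : (forall w, G w = H w) -> Cder G z l -> Cder H z l.
Proof. intros E D eps He; destruct (D eps He) as [d [Hd Hw]]; exists d; split; auto; intros w; rewrite <- !E; auto. Qed.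

Lemma Cder_lin s z : Cder (fun w => Cminus w s) z (RtoC 1).
Proof.
  intros eps He; exists 1; split; [lra|]; intros w _.
  replace (Cminus (Cminus (Cminus w s) (Cminus z s)) (Cmult (RtoC 1) (Cminus w z))) with (RtoC 0) by ring.
  rewrite Cmod_0. apply Rmult_le_pos; [lra|apply Cmod_ge_0].
Qed.

Lemma Cder_const k z : Cder (fun _ => k) z (RtoC 0).
Proof.
  intros eps He; exists 1; split; [lra|]; intros w _.
  replace (Cminus (Cminus k k) (Cmult (RtoC 0) (Cminus w z))) with (RtoC 0) by ring.
  rewrite Cmod_0. apply Rmult_le_pos; [lra|apply Cmod_ge_0].
Qed.

Lemma Cder_scale G z l k : Cder G z l -> Cder (fun w => Cmult k (G w)) z (Cmult k l).
Proof.
  intros D eps He.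
  destruct (D (eps / (Cmod k + 1))) as [d [Hd Hw]].
  { apply Rdiv_lt_0_compat; [lra|]. assert (H := Cmod_ge_0 k); lra. }
  exists d; split; auto; intros w Hwz.
  replace (Cminus (Cminus (Cmult k (G w)) (Cmult k (G z))) (Cmult (Cmult k l) (Cminus w z)))
    with (Cmult k (Cminus (Cminus (G w) (G z)) (Cmult l (Cminus w z)))) by ring.
  rewrite Cmod_mult. specialize (Hw w Hwz).
  assert (Hk := Cmod_ge_0 k). assert (Hc := Cmod_ge_0 (Cminus w z)).
  apply Rle_trans with (Cmod k * (eps / (Cmod k + 1) * Cmod (Cminus w z))).
  { apply Rmult_le_compat_l; auto. }
  assert (Cmod k * (eps / (Cmod k + 1)) <= eps).
  { unfold Rdiv. rewrite <- Rmult_assoc. apply Rle_trans with ((Cmod k + 1) * eps * / (Cmod k + 1)).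
    - apply Rmult_le_compat_r; [left; apply Rinv_0_lt_compat; lra|]. nra.
    - rewrite Rmult_comm, <- Rmult_assoc, Rinv_l by lra. lra. }
  nra.
Qed.

Lemma Cder_plus G H z l1 l2 : Cder G z l1 -> Cder H z l2 ->
  Cder (fun w => Cplus (G w) (H w)) z (Cplus l1 l2).
Proof.
  intros D1 D2 eps He.
  destruct (D1 (eps/2)) as [d1 [Hd1 H1]]; [lra|].
  destruct (D2 (eps/2)) as [d2 [Hd2 H2]]; [lra|].
  exists (Rmin d1 d2); split; [apply Rmin_glb_lt; auto|]. intros w Hw.
  assert (A1 := H1 w (Rlt_le_trans _ _ _ Hw (Rmin_l _ _))).
  assert (A2 := H2 w (Rlt_le_trans _ _ _ Hw (Rmin_r _ _))).
  replace (Cminus (Cminus (Cplus (G w) (H w)) (Cplus (G z) (H z))) (Cmult (Cplus l1 l2) (Cminus w z)))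
    with (Cplus (Cminus (Cminus (G w) (G z)) (Cmult l1 (Cminus w z)))
                (Cminus (Cminus (H w) (H z)) (Cmult l2 (Cminus w z)))) by ring.
  eapply Rle_trans; [apply Cmod_triangle|]. lra.
Qed.

Lemma Cder_mult G H z l1 l2 : Cder G z l1 -> Cder H z l2 ->
  Cder (fun w => Cmult (G w) (H w)) z (Cplus (Cmult l1 (H z)) (Cmult (G z) l2)).
Proof.
  intros D1 D2 eps He.
  assert (CH := Cder_cont _ _ _ D2).
  set (B := Cmod (H z) + 1).
  assert (HB : 0 < B) by (unfold B; assert (X := Cmod_ge_0 (H z)); lra).
  set (A := Cmod l1 + 1). assert (HA : 0 < A) by (unfold A; assert (X := Cmod_ge_0 l1); lra).
  set (Gz := Cmod (G z) + 1). assert (HG : 0 < Gz) by (unfold Gz; assert (X := Cmod_ge_0 (G z)); lra).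
  destruct (D1 (eps / 3 / B)) as [d1 [Hd1 H1]]. { apply Rdiv_lt_0_compat; lra. }
  destruct (D2 (eps / 3 / Gz)) as [d2 [Hd2 H2]]. { apply Rdiv_lt_0_compat; lra. }
  destruct (CH (Rmin 1 (eps / 3 / A))) as [d3 [Hd3 H3]].
  { apply Rmin_glb_lt; [lra|]. apply Rdiv_lt_0_compat; lra. }
  exists (Rmin d1 (Rmin d2 d3)); split. { repeat apply Rmin_glb_lt; auto. }
  intros w Hw.
  assert (Hw1 : Cmod (Cminus w z) < d1) by (eapply Rlt_le_trans; [apply Hw|apply Rmin_l]).
  assert (Hw2 : Cmod (Cminus w z) < d2) by (eapply Rlt_le_trans; [apply Hw|]; eapply Rle_trans; [apply Rmin_r|apply Rmin_l]).
  assert (Hw3 : Cmod (Cminus w z) < d3) by (eapply Rlt_le_trans; [apply Hw|]; eapply Rle_trans; [apply Rmin_r|apply Rmin_r]).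
  specialize (H1 w Hw1). specialize (H2 w Hw2). specialize (H3 w Hw3).
  replace (Cminus (Cminus (Cmult (G w) (H w)) (Cmult (G z) (H z)))
                  (Cmult (Cplus (Cmult l1 (H z)) (Cmult (G z) l2)) (Cminus w z)))
    with (Cplus (Cplus (Cmult (Cminus (Cminus (G w) (G z)) (Cmult l1 (Cminus w z))) (H w))
                       (Cmult (Cmult l1 (Cminus w z)) (Cminus (H w) (H z))))
                (Cmult (G z) (Cminus (Cminus (H w) (H z)) (Cmult l2 (Cminus w z))))) by ring.
  set (r := Cmod (Cminus w z)). assert (Hr : 0 <= r) by apply Cmod_ge_0.
  assert (HHw : Cmod (H w) <= B).
  { unfold B. replace (H w) with (Cplus (H z) (Cminus (H w) (H z))) by ring.
    eapply Rle_trans; [apply Cmod_triangle|].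
    assert (Cmod (Cminus (H w) (H z)) <= 1) by (left; eapply Rlt_le_trans; [apply H3|apply Rmin_l]).
    lra. }
  assert (HHd : Cmod (Cminus (H w) (H z)) <= eps / 3 / A) by (left; eapply Rlt_le_trans; [apply H3|apply Rmin_r]).
  eapply Rle_trans; [apply Cmod_triangle|].
  eapply Rle_trans; [apply Rplus_le_compat_r, Cmod_triangle|].
  rewrite !Cmod_mult.
  assert (T1 : Cmod (Cminus (Cminus (G w) (G z)) (Cmult l1 (Cminus w z))) * Cmod (H w) <= eps / 3 * r).
  { apply Rle_trans with (eps / 3 / B * r * B).
    - apply Rmult_le_compat; auto using Cmod_ge_0.
    - right. field. lra. }
  assert (T2 : Cmod l1 * r * Cmod (Cminus (H w) (H z)) <= eps / 3 * r).
  { apply Rle_trans with (A * r * (eps / 3 / A)).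
    - apply Rmult_le_compat; auto using Cmod_ge_0.
      + apply Rmult_le_pos; auto using Cmod_ge_0.
      + apply Rmult_le_compat_r; auto. unfold A; lra.
    - right. field. lra. }
  assert (T3 : Cmod (G z) * Cmod (Cminus (Cminus (H w) (H z)) (Cmult l2 (Cminus w z))) <= eps / 3 * r).
  { apply Rle_trans with (Gz * (eps / 3 / Gz * r)).
    - apply Rmult_le_compat; auto using Cmod_ge_0. unfold Gz; lra.
    - right. field. lra. }
  fold r in T1, T2, T3 |- *. lra.
Qed.

Lemma Cmod_pos (x : C) : x <> RtoC 0 -> 0 < Cmod x.
Proof.
  intros H. destruct (Cmod_ge_0 x) as [E|E]; auto. exfalso; apply H, Cmod_eq_0; auto.
Qed.

Lemma Cmult_neq0 (a b : C) : a <> RtoC 0 -> b <> RtoC 0 -> Cmult a b <> RtoC 0.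
Proof.
  intros Ha Hb E. assert (X : Cmod (Cmult a b) = 0) by (rewrite E; apply Cmod_0).
  rewrite Cmod_mult in X. apply Cmod_pos in Ha. apply Cmod_pos in Hb. nra.
Qed.

Lemma Cder_invlin s z : z <> s ->
  Cder (fun w => Cinv (Cminus w s)) z (Copp (Cinv (Cmult (Cminus z s) (Cminus z s)))).
Proof.
  intros Hz eps He.
  set (m := Cmod (Cminus z s)).
  assert (Hm : 0 < m).
  { unfold m. destruct (Cmod_ge_0 (Cminus z s)) as [H|H]; auto.
    exfalso. apply Hz. symmetry in H. apply Cmod_eq_0 in H.
    replace z with (Cplus (Cminus z s) s) by ring. rewrite H. ring. }
  exists (Rmin (m / 2) (eps * m * m * m / 2)). split.
  { apply Rmin_glb_lt; [lra|]. apply Rdiv_lt_0_compat; [|lra]. repeat apply Rmult_lt_0_compat; auto. }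
  intros w Hw.
  assert (Hw1 : Cmod (Cminus w z) < m / 2) by (eapply Rlt_le_trans; [apply Hw|apply Rmin_l]).
  assert (Hw2 : Cmod (Cminus w z) < eps * m * m * m / 2) by (eapply Rlt_le_trans; [apply Hw|apply Rmin_r]).
  assert (Hws : m / 2 <= Cmod (Cminus w s)).
  { unfold m. replace (Cminus z s) with (Cminus (Cminus w s) (Cminus w z)) by ring.
    assert (X := Cmod_triangle (Cminus w s) (Copp (Cminus w z))). rewrite Cmod_opp in X.
    unfold Cminus at 1. unfold m in Hw1.
    assert (Y : Cmod (Cminus z s) <= Cmod (Cminus w s) + Cmod (Cminus w z)).
    { replace (Cminus z s) with (Cplus (Cminus w s) (Copp (Cminus w z))) by ring. auto. }
    lra. }
  assert (Hws0 : Cminus w s <> RtoC 0).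
  { intro E. rewrite E, Cmod_0 in Hws. lra. }
  assert (Hzs0 : Cminus z s <> RtoC 0).
  { intro E. unfold m in Hm. rewrite E, Cmod_0 in Hm. lra. }
  replace (Cminus (Cminus (Cinv (Cminus w s)) (Cinv (Cminus z s)))
     (Cmult (Copp (Cinv (Cmult (Cminus z s) (Cminus z s)))) (Cminus w z)))
   with (Cmult (Cmult (Cminus w z) (Cminus w z))
          (Cinv (Cmult (Cminus w s) (Cmult (Cminus z s) (Cminus z s))))).
  2:{ field. auto. }
  rewrite !Cmod_mult, Cmod_inv, !Cmod_mult.
  2:{ repeat apply Cmult_neq0; auto. }
  fold m. set (r := Cmod (Cminus w z)). set (q := Cmod (Cminus w s)).
  fold r in Hw1, Hw2. fold q in Hws.
  assert (Hr : 0 <= r) by apply Cmod_ge_0.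
  assert (Hq : 0 < q) by lra.
  apply Rle_trans with (r * r * / (m / 2 * (m * m))).
  { apply Rmult_le_compat_l; [nra|]. apply Rinv_le_contravar.
    - repeat apply Rmult_lt_0_compat; lra.
    - apply Rmult_le_compat_r; nra. }
  apply Rle_trans with (r * (eps * m * m * m / 2) * / (m / 2 * (m * m))).
  { apply Rmult_le_compat_r. { left; apply Rinv_0_lt_compat; repeat apply Rmult_lt_0_compat; lra. }
    apply Rmult_le_compat_l; lra. }
  right. field. lra.
Qed.

Lemma Cder_h G x y l : Cder G (x, y) l ->
  @is_derive R_AbsRing C_R_NormedModule (fun t => G (t, y)) x l.
Proof.
  intros D. split; [apply is_linear_scal_l|].
  intros x0 Hx0. apply (is_filter_lim_locally_unique (K:=R_AbsRing) (V:=R_NormedModule)) in Hx0. subst x0.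
  intros eps. destruct (D eps (cond_pos eps)) as [d [Hd Hw]].
  exists (mkposreal d Hd). intros t Ht.
  change (Rabs (t - x) < d) in Ht.
  assert (E : Cminus (t, y) (x, y) = RtoC (t - x)) by (apply injective_projections; simpl; ring).
  assert (Hc : Cmod (Cminus (t, y) (x, y)) < d) by (rewrite E, Cmod_R; auto).
  specialize (Hw _ Hc). rewrite E, Cmod_R in Hw.
  rewrite normC. change (norm (minus t x)) with (Rabs (t - x)).
  eapply Rle_trans; [right; apply (f_equal Cmod)|exact Hw].
  apply injective_projections; simpl; unfold plus, opp, scal, minus; simpl;
    unfold prod_plus, prod_opp, prod_scal; simpl;
    unfold plus, opp, mult; simpl; ring.
Qed.

Lemma Cder_v G x y l : Cder G (x, y) l ->
  @is_derive R_AbsRing C_R_NormedModule (fun t => G (x, t)) y (Cmult Ci l).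
Proof.
  intros D. split; [apply is_linear_scal_l|].
  intros x0 Hx0. apply (is_filter_lim_locally_unique (K:=R_AbsRing) (V:=R_NormedModule)) in Hx0. subst x0.
  intros eps. destruct (D eps (cond_pos eps)) as [d [Hd Hw]].
  exists (mkposreal d Hd). intros t Ht.
  change (Rabs (t - y) < d) in Ht.
  assert (E : Cminus (x, t) (x, y) = Cmult Ci (RtoC (t - y))) by (apply injective_projections; simpl; ring).
  assert (E2 : Cmod (Cminus (x, t) (x, y)) = Rabs (t - y)) by (rewrite E, Cmod_mult, Cmod_Ci, Cmod_R; ring).
  assert (Hc : Cmod (Cminus (x, t) (x, y)) < d) by (rewrite E2; auto).
  specialize (Hw _ Hc). rewrite E2 in Hw. rewrite E in Hw.
  rewrite normC. change (norm (minus t y)) with (Rabs (t - y)).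
  eapply Rle_trans; [right; apply (f_equal Cmod)|exact Hw].
  apply injective_projections; simpl; unfold plus, opp, scal, minus; simpl;
    unfold prod_plus, prod_opp, prod_scal; simpl;
    unfold plus, opp, mult; simpl; ring.
Qed.

Lemma Ccont_scale g k z : Ccont g z -> Ccont (fun w => Cmult k (g w)) z.
Proof.
  intros H eps He.
  destruct (H (eps / (Cmod k + 1))) as [d [Hd Hw]].
  { apply Rdiv_lt_0_compat; [lra|]. assert (X := Cmod_ge_0 k); lra. }
  exists d; split; auto; intros w Hwz.
  replace (Cminus (Cmult k (g w)) (Cmult k (g z))) with (Cmult k (Cminus (g w) (g z))) by ring.
  rewrite Cmod_mult. specialize (Hw w Hwz).
  assert (Hk := Cmod_ge_0 k).
  apply Rle_lt_trans with ((Cmod k + 1) * Cmod (Cminus (g w) (g z))).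
  { assert (X := Cmod_ge_0 (Cminus (g w) (g z))). nra. }
  apply Rlt_le_trans with ((Cmod k + 1) * (eps / (Cmod k + 1))).
  { apply Rmult_lt_compat_l; [lra|auto]. }
  right; field; lra.
Qed.

Definition derB (G g : C -> C) (a b c d : R) : Prop :=
  (forall t, a <= t <= b -> Cder G (t, c) (g (t, c)) /\ Cder G (t, d) (g (t, d))) /\
  (forall t, c <= t <= d -> Cder G (a, t) (g (a, t)) /\ Cder G (b, t) (g (b, t))).

Lemma rect_primB G g a b c d : a <= b -> c <= d ->
  derB G g a b c d -> contB g a b c d -> rect g a b c d = RtoC 0.
Proof.
  intros Hab Hcd [D1 D2] [C1 C2].
  assert (IHe : forall y, (forall t, a <= t <= b -> Cder G (t, y) (g (t, y)) /\ Ccont g (t, y)) ->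
     IH g a b y = Cminus (G (b, y)) (G (a, y))).
  { intros y Hy. unfold IH. apply (is_RInt_unique (V:=C_R_CompleteNormedModule)).
    apply (is_RInt_derive (V:=C_R_CompleteNormedModule) (fun t => G (t, y)) (fun t => g (t, y))).
    - intros t Ht. rewrite Rmin_left, Rmax_right in Ht by lra. apply Cder_h, Hy; lra.
    - intros t Ht. rewrite Rmin_left, Rmax_right in Ht by lra. apply cont_h, Hy; lra. }
  assert (IVe : forall x, (forall t, c <= t <= d -> Cder G (x, t) (g (x, t)) /\ Ccont g (x, t)) ->
     Cmult Ci (IV g x c d) = Cminus (G (x, d)) (G (x, c))).
  { intros x Hx. unfold IV.
    assert (Hex : @ex_RInt C_R_NormedModule (fun y => g (x, y)) c d) by (apply exv; auto; intros; apply Hx; lra).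
    rewrite <- (RInt_Cmult _ Ci c d Hex).
    apply (is_RInt_unique (V:=C_R_CompleteNormedModule)).
    apply (is_RInt_derive (V:=C_R_CompleteNormedModule) (fun t => G (x, t)) (fun t => Cmult Ci (g (x, t)))).
    - intros t Ht. rewrite Rmin_left, Rmax_right in Ht by lra. apply Cder_v, Hx; lra.
    - intros t Ht. rewrite Rmin_left, Rmax_right in Ht by lra.
      apply (cont_v (fun w => Cmult Ci (g w))), Ccont_scale, Hx; lra. }
  unfold rect. rewrite (IHe c), (IHe d), (IVe a), (IVe b).
  - ring.
  - intros t Ht; split; [apply D2|apply C2]; auto.
  - intros t Ht; split; [apply D2|apply C2]; auto.
  - intros t Ht; split; [apply D1|apply C1]; auto.
  - intros t Ht; split; [apply D1|apply C1]; auto.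
Qed.

Lemma rect_prim G g a b c d : a <= b -> c <= d ->
  (forall x y, a <= x <= b -> c <= y <= d -> Cder G (x, y) (g (x, y))) ->
  contR g a b c d -> rect g a b c d = RtoC 0.
Proof.
  intros Hab Hcd HD Hc. apply (rect_primB G); auto.
  - split; intros; split; apply HD; lra.
  - apply contR_contB; auto.
Qed.

Lemma Cder_l G z l l' : l = l' -> Cder G z l -> Cder G z l'.
Proof. intros ->; auto. Qed.

Lemma Cpown_add z a b : Cpown z (a + b) = Cmult (Cpown z a) (Cpown z b).
Proof. induction a; simpl; [ring|rewrite IHa; ring]. Qed.

Lemma Cmod_Cpown z n : Cmod (Cpown z n) = Cmod z ^ n.
Proof. induction n; simpl; [apply Cmod_1|rewrite Cmod_mult, IHn; ring]. Qed.

Lemma Cpown_neq0 z n : z <> RtoC 0 -> Cpown z n <> RtoC 0.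
Proof.
  intros Hz; induction n; simpl.
  - intro E. injection E. lra.
  - apply Cmult_neq0; auto.
Qed.

Lemma Cpown_inv z n : z <> RtoC 0 -> Cinv (Cpown z n) = Cpown (Cinv z) n.
Proof.
  intros Hz. induction n; simpl.
  - apply injective_projections; simpl; field.
  - rewrite <- IHn. field. split; auto. apply Cpown_neq0; auto.
Qed.

Lemma Cder_pown s n z :
  Cder (fun w => Cpown (Cminus w s) (S n)) z (Cmult (RtoC (INR (S n))) (Cpown (Cminus z s) n)).
Proof.
  induction n.
  - eapply Cder_l; [|apply (Cder_mult _ _ z _ _ (Cder_lin s z) (Cder_const (RtoC 1) z))].
    simpl. apply injective_projections; simpl; ring.
  - eapply Cder_l; [|apply (Cder_mult _ _ z _ _ (Cder_lin s z) IHn)].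
    change (Cpown (Cminus z s) (S n)) with (Cmult (Cminus z s) (Cpown (Cminus z s) n)).
    rewrite (S_INR (S n)), RtoC_plus. ring.
Qed.

Lemma Cpown_cont s n z : Ccont (fun w => Cpown (Cminus w s) n) z.
Proof.
  destruct n.
  - intros eps He. exists 1. split; [lra|]. intros w _. simpl.
    replace (Cminus (RtoC 1) (RtoC 1)) with (RtoC 0) by ring. rewrite Cmod_0; auto.
  - eapply Cder_cont, Cder_pown.
Qed.

Lemma rect_pown s n a b c d : a <= b -> c <= d ->
  rect (fun w => Cpown (Cminus w s) n) a b c d = RtoC 0.
Proof.
  intros Hab Hcd.
  apply (rect_prim (fun w => Cmult (Cinv (RtoC (INR (S n)))) (Cpown (Cminus w s) (S n)))); auto.
  - intros x y _ _. eapply Cder_l; [|apply Cder_scale, Cder_pown].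
    field. intro E. apply (not_0_INR (S n)); [discriminate|]. now injection E.
  - intros x y _ _. apply Cpown_cont.
Qed.

Lemma Cder_powinv s k z : z <> s ->
  Cder (fun w => Cpown (Cinv (Cminus w s)) (S k)) z
       (Copp (Cmult (RtoC (INR (S k))) (Cpown (Cinv (Cminus z s)) (S (S k))))).
Proof.
  intros Hz.
  assert (Hzs : Cminus z s <> RtoC 0).
  { intro E. apply Hz. replace z with (Cplus (Cminus z s) s) by ring. rewrite E. ring. }
  assert (Ei : Cinv (Cmult (Cminus z s) (Cminus z s)) = Cmult (Cinv (Cminus z s)) (Cinv (Cminus z s)))
    by (field; auto).
  induction k.
  - eapply Cder_l; [|apply (Cder_mult _ _ z _ _ (Cder_invlin s z Hz) (Cder_const (RtoC 1) z))].
    rewrite Ei. simpl. apply injective_projections; simpl; ring.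
  - eapply Cder_l; [|apply (Cder_mult _ _ z _ _ (Cder_invlin s z Hz) IHk)].
    rewrite Ei. simpl Cpown. rewrite (S_INR (S k)), RtoC_plus. ring.
Qed.

Record Rct := mkR { ra : R; rb : R; rc : R; rd : R }.

Definition rectR f (r : Rct) := rect f (ra r) (rb r) (rc r) (rd r).

Definition pick (f : C -> C) (r : Rct) : Rct :=
  let a := ra r in let b := rb r in let c := rc r in let d := rd r in
  let mx := (a + b) / 2 in let my := (c + d) / 2 in
  let m := Cmod (rect f a b c d) / 4 in
  if Rle_dec m (Cmod (rect f a mx c my)) then mkR a mx c my
  else if Rle_dec m (Cmod (rect f mx b c my)) then mkR mx b c my
  else if Rle_dec m (Cmod (rect f a mx my d)) then mkR a mx my d
  else mkR mx b my d.

Lemma Cmod4p (x y z w : C) :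
  Cmod (Cplus (Cplus x y) (Cplus z w)) <= Cmod x + Cmod y + Cmod z + Cmod w.
Proof.
  eapply Rle_trans; [apply Cmod_triangle|].
  assert (H1 := Cmod_triangle x y). assert (H2 := Cmod_triangle z w). lra.
Qed.

Lemma pick_spec f r : ra r <= rb r -> rc r <= rd r -> contR f (ra r) (rb r) (rc r) (rd r) ->
  let r' := pick f r in
  ra r <= ra r' /\ rb r' <= rb r /\ rc r <= rc r' /\ rd r' <= rd r /\
  rb r' - ra r' = (rb r - ra r) / 2 /\ rd r' - rc r' = (rd r - rc r) / 2 /\
  Cmod (rectR f r) / 4 <= Cmod (rectR f r').
Proof.
  destruct r as [a b c d]; simpl. intros Hab Hcd Hc.
  set (mx := (a + b) / 2). set (my := (c + d) / 2).
  assert (E : rect f a b c d =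
    Cplus (Cplus (rect f a mx c my) (rect f mx b c my))
          (Cplus (rect f a mx my d) (rect f mx b my d))).
  { rewrite (rect_splitx f a mx b c d) by (first [unfold mx; lra | auto]).
    rewrite (rect_splity f a mx c my d) by (unfold mx, my; first [lra | eapply contR_sub; [..|apply Hc]; lra]).
    rewrite (rect_splity f mx b c my d) by (unfold mx, my; first [lra | eapply contR_sub; [..|apply Hc]; lra]).
    ring. }
  unfold pick, rectR; simpl. fold mx my.
  destruct (Rle_dec _ _) as [H1|H1]; [simpl; unfold mx, my; repeat split; try lra; auto|].
  destruct (Rle_dec _ _) as [H2|H2]; [simpl; unfold mx, my; repeat split; try lra; auto|].
  destruct (Rle_dec _ _) as [H3|H3]; [simpl; unfold mx, my; repeat split; try lra; auto|].
  simpl. unfold mx, my; repeat split; try lra.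
  fold mx my. assert (X := Cmod4p (rect f a mx c my) (rect f mx b c my) (rect f a mx my d) (rect f mx b my d)).
  rewrite <- E in X. lra.
Qed.

Fixpoint seqR (f : C -> C) (r0 : Rct) (n : nat) : Rct :=
  match n with O => r0 | S n => pick f (seqR f r0 n) end.

Lemma pow2_big (x : R) : exists n : nat, x < 2 ^ n.
Proof.
  destruct (INR_archimed 1 x ltac:(lra)) as [n Hn]. exists n.
  assert (forall k, INR k <= 2 ^ k).
  { induction k. simpl; lra. rewrite S_INR; simpl. assert (1 <= 2 ^ k) by (apply pow_R1_Rle; lra). lra. }
  specialize (H n). lra.
Qed.

Lemma Cmod_le_sum (p q : R) : Cmod (p, q) <= Rabs p + Rabs q.
Proof.
  replace (p, q) with (Cplus (RtoC p) (Cmult Ci (RtoC q))) by (apply injective_projections; simpl; ring).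
  eapply Rle_trans; [apply Cmod_triangle|]. rewrite Cmod_mult, Cmod_Ci, !Cmod_R. lra.
Qed.

Lemma goursat f a b c d : a <= b -> c <= d ->
  (forall x y, a <= x <= b -> c <= y <= d -> exists l, Cder f (x, y) l) ->
  rect f a b c d = RtoC 0.
Proof.
  intros Hab Hcd HD.
  assert (Hc : contR f a b c d).
  { intros x y Hx Hy. destruct (HD x y Hx Hy) as [l Hl]. eapply Cder_cont; eauto. }
  set (r0 := mkR a b c d).
  set (A := fun n => ra (seqR f r0 n)). set (B := fun n => rb (seqR f r0 n)).
  set (Cc := fun n => rc (seqR f r0 n)). set (Dd := fun n => rd (seqR f r0 n)).
  assert (INV : forall n, a <= A n /\ A n <= B n /\ B n <= b /\ c <= Cc n /\ Cc n <= Dd n /\ Dd n <= d /\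
     B n - A n = (b - a) / 2 ^ n /\ Dd n - Cc n = (d - c) / 2 ^ n /\
     Cmod (rect f a b c d) / 4 ^ n <= Cmod (rectR f (seqR f r0 n))).
  { induction n.
    - unfold A, B, Cc, Dd; simpl. unfold rectR; simpl. repeat split; try lra.
    - destruct IHn as [I1 [I2 [I3 [I4 [I5 [I6 [I7 [I8 I9]]]]]]]].
      assert (HS := pick_spec f (seqR f r0 n) I2 I5 ltac:(eapply contR_sub; [..|apply Hc]; auto)).
      simpl in HS. fold (A n) (B n) (Cc n) (Dd n) in HS.
      unfold A, B, Cc, Dd; simpl. fold (seqR f r0 n).
      destruct HS as [S1 [S2 [S3 [S4 [S5 [S6 S7]]]]]].
      fold A B Cc Dd in S1, S2, S3, S4, S5, S6.
      assert (P2 : 0 < 2 ^ n) by (apply pow_lt; lra).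
      assert (P4 : 0 < 4 ^ n) by (apply pow_lt; lra).
      repeat split; try lra.
      + rewrite S5, I7. field. lra.
      + rewrite S6, I8. field. lra.
      + simpl. apply Rle_trans with (Cmod (rectR f (seqR f r0 n)) / 4); [|exact S7].
        replace (Cmod (rect f a b c d) / (4 * 4 ^ n)) with (Cmod (rect f a b c d) / 4 ^ n / 4) by (field; lra).
        unfold Rdiv at 1. unfold Rdiv at 2. apply Rmult_le_compat_r; [lra|]. exact I9. }
  assert (HAg : Un_growing A).
  { intros n. unfold A; simpl. destruct (INV n) as [I1 [I2 [_ [_ [I5 _]]]]].
    apply (pick_spec f (seqR f r0 n) I2 I5). eapply contR_sub; [..|apply Hc]; apply INV. }
  assert (HCg : Un_growing Cc).
  { intros n. unfold Cc; simpl. destruct (INV n) as [I1 [I2 [_ [_ [I5 _]]]]].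
    apply (pick_spec f (seqR f r0 n) I2 I5). eapply contR_sub; [..|apply Hc]; apply INV. }
  assert (HBd : forall n, B (S n) <= B n).
  { intros n. unfold B; simpl. destruct (INV n) as [I1 [I2 [_ [_ [I5 _]]]]].
    apply (pick_spec f (seqR f r0 n) I2 I5). eapply contR_sub; [..|apply Hc]; apply INV. }
  assert (HDd : forall n, Dd (S n) <= Dd n).
  { intros n. unfold Dd; simpl. destruct (INV n) as [I1 [I2 [_ [_ [I5 _]]]]].
    apply (pick_spec f (seqR f r0 n) I2 I5). eapply contR_sub; [..|apply Hc]; apply INV. }
  assert (HBm : forall m n, (m <= n)%nat -> B n <= B m).
  { intros m n Hmn. induction Hmn; [lra|]. specialize (HBd m0). lra. }
  assert (HDm : forall m n, (m <= n)%nat -> Dd n <= Dd m).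
  { intros m n Hmn. induction Hmn; [lra|]. specialize (HDd m0). lra. }
  assert (HAB : forall m n, A m <= B n).
  { intros m n. destruct (le_ge_dec m n) as [H|H].
    - apply Rle_trans with (A n); [apply tech9; auto|apply INV].
    - apply Rle_trans with (B m); [apply INV|apply HBm; auto]. }
  assert (HCD : forall m n, Cc m <= Dd n).
  { intros m n. destruct (le_ge_dec m n) as [H|H].
    - apply Rle_trans with (Cc n); [apply tech9; auto|apply INV].
    - apply Rle_trans with (Dd m); [apply INV|apply HDm; auto]. }
  destruct (growing_cv A HAg) as [x0 Hx0].
  { exists b. intros x [n ->]. destruct (INV n) as [? [? [? _]]]; lra. }
  destruct (growing_cv Cc HCg) as [y0 Hy0].
  { exists d. intros x [n ->]. destruct (INV n) as [? [? [? [? [? [? _]]]]]]; lra. }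
  assert (Hx0n : forall n, A n <= x0 <= B n).
  { intros n; split; [apply growing_ineq; auto|].
    destruct (Rle_dec x0 (B n)) as [H|H]; auto. exfalso.
    destruct (Hx0 (x0 - B n)) as [N HN]; [lra|].
    specialize (HN N (Nat.le_refl N)). unfold Rdist in HN. specialize (HAB N n).
    rewrite Rabs_left1 in HN; [lra|]. assert (A N <= x0) by (apply growing_ineq; auto). lra. }
  assert (Hy0n : forall n, Cc n <= y0 <= Dd n).
  { intros n; split; [apply growing_ineq; auto|].
    destruct (Rle_dec y0 (Dd n)) as [H|H]; auto. exfalso.
    destruct (Hy0 (y0 - Dd n)) as [N HN]; [lra|].
    specialize (HN N (Nat.le_refl N)). unfold Rdist in HN. specialize (HCD N n).
    rewrite Rabs_left1 in HN; [lra|]. assert (Cc N <= y0) by (apply growing_ineq; auto). lra. }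
  assert (Hz0 : a <= x0 <= b /\ c <= y0 <= d).
  { destruct (Hx0n O) as [X1 X2]. destruct (Hy0n O) as [Y1 Y2]. unfold A, B, Cc, Dd in *; simpl in *. lra. }
  destruct (HD x0 y0 (proj1 Hz0) (proj2 Hz0)) as [l Hl].
  set (D := (b - a) + (d - c)).
  apply Cmod_eq_0. apply Rle_antisym; [|apply Cmod_ge_0].
  apply Rnot_lt_le. intros Hpos.
  set (eps := Cmod (rect f a b c d) / (4 * (D * D + 1))).
  assert (Heps : 0 < eps) by (unfold eps; apply Rdiv_lt_0_compat; [lra|]; nra).
  destruct (Hl eps Heps) as [dl [Hdl Hw]].
  destruct (pow2_big (D / dl)) as [n Hn].
  assert (P2 : 0 < 2 ^ n) by (apply pow_lt; lra).
  assert (P4 : 4 ^ n = 2 ^ n * 2 ^ n) by (rewrite <- Rpow_mult_distr; f_equal; lra).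
  assert (HDn : D / 2 ^ n < dl).
  { apply (Rmult_lt_reg_r (2 ^ n / dl)). apply Rdiv_lt_0_compat; lra.
    replace (D / 2 ^ n * (2 ^ n / dl)) with (D / dl) by (field; lra).
    replace (dl * (2 ^ n / dl)) with (2 ^ n) by (field; lra). exact Hn. }
  destruct (INV n) as [I1 [I2 [I3 [I4 [I5 [I6 [I7 [I8 I9]]]]]]]].
  set (z0 := (x0, y0)).
  set (g := fun w => Cminus (Cminus (f w) (Cmult (f z0) (Cpown (Cminus w z0) 0)))
                            (Cmult l (Cpown (Cminus w z0) 1))).
  assert (HcR : contR f (A n) (B n) (Cc n) (Dd n)) by (eapply contR_sub; [..|apply Hc]; lra).
  assert (Hrok : forall k, rok (fun w => Cpown (Cminus w z0) k) (A n) (B n) (Cc n) (Dd n)).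
  { intros k. apply contR_rok; auto. intros ? ? ? ?; apply Cpown_cont. }
  assert (Eg : rectR f (seqR f r0 n) = rect g (A n) (B n) (Cc n) (Dd n)).
  { unfold g. rewrite rect_minus, rect_minus, rect_mult, rect_mult, !rect_pown by
      (auto using contR_rok, rok_mult, rok_minus).
    unfold rectR. fold (A n) (B n) (Cc n) (Dd n). ring. }
  assert (Hbd : bdd g (A n) (B n) (Cc n) (Dd n) (eps * (D / 2 ^ n))).
  { assert (K : forall x y, A n <= x <= B n -> Cc n <= y <= Dd n -> Cmod (g (x, y)) <= eps * (D / 2 ^ n)).
    { intros x y Hx Hy.
      assert (Hxy : Cmod (Cminus (x, y) z0) <= D / 2 ^ n).
      { unfold z0. eapply Rle_trans; [apply (Cmod_le_sum (x - x0) (y - y0))|].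
        destruct (Hx0n n); destruct (Hy0n n).
        unfold D. replace ((b - a + (d - c)) / 2 ^ n) with ((b - a) / 2 ^ n + (d - c) / 2 ^ n) by (field; lra).
        rewrite <- I7, <- I8. apply Rplus_le_compat; apply Rabs_le; lra. }
      change (x0, y0) with z0 in Hw. specialize (Hw (x, y) ltac:(lra)).
      unfold g. simpl Cpown.
      replace (Cminus (Cminus (f (x, y)) (Cmult (f z0) (RtoC 1))) (Cmult l (Cmult (Cminus (x, y) z0) (RtoC 1))))
        with (Cminus (Cminus (f (x, y)) (f z0)) (Cmult l (Cminus (x, y) z0))) by ring.
      eapply Rle_trans; [apply Hw|]. apply Rmult_le_compat_l; lra. }
    split; intros t Ht; split; apply K; lra. }
  assert (Hb := rect_bound g (A n) (B n) (Cc n) (Dd n) _ I2 I5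
     ltac:(unfold g; auto using contR_rok, rok_mult, rok_minus) Hbd).
  rewrite <- Eg in Hb. rewrite I7, I8 in Hb.
  assert (X : Cmod (rect f a b c d) / 4 ^ n <= 2 * eps * D * D / 4 ^ n).
  { eapply Rle_trans; [apply I9|]. eapply Rle_trans; [apply Hb|]. right. rewrite P4. unfold D. field. lra. }
  assert (X2 : Cmod (rect f a b c d) <= 2 * eps * D * D).
  { apply (Rmult_le_reg_r (/ 4 ^ n)). apply Rinv_0_lt_compat; apply pow_lt; lra. exact X. }
  unfold eps in X2.
  assert (Cmod (rect f a b c d) * (2 * D * D / (4 * (D * D + 1))) < Cmod (rect f a b c d)).
  { rewrite <- (Rmult_1_r (Cmod (rect f a b c d))) at 2. apply Rmult_lt_compat_l; auto.
    apply (Rmult_lt_reg_r (4 * (D * D + 1))); [nra|]. unfold Rdiv. rewrite Rmult_assoc, Rinv_l by nra. nra. }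
  assert (Cmod (rect f a b c d) * (2 * D * D / (4 * (D * D + 1))) = 2 * (Cmod (rect f a b c d) / (4 * (D * D + 1))) * D * D)
    by (field; nra).
  lra.
Qed.

Lemma rect_splitxB f a m b c d : a <= m <= b -> c <= d ->
  contB f a m c d -> contB f m b c d ->
  rect f a b c d = Cplus (rect f a m c d) (rect f m b c d).
Proof.
  intros Hm Hcd H1 H2.
  destruct (contB_rok f a m c d ltac:(lra) Hcd H1) as [h1 [h2 [h3 h4]]].
  destruct (contB_rok f m b c d ltac:(lra) Hcd H2) as [k1 [k2 [k3 k4]]].
  unfold rect, IH.
  rewrite (Chasles_C _ a m b), (Chasles_C (fun x => f (x, d)) a m b) by auto.
  unfold IV. ring.
Qed.

Lemma rect_splityB f a b c m d : a <= b -> c <= m <= d ->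
  contB f a b c m -> contB f a b m d ->
  rect f a b c d = Cplus (rect f a b c m) (rect f a b m d).
Proof.
  intros Hab Hm H1 H2.
  destruct (contB_rok f a b c m Hab ltac:(lra) H1) as [h1 [h2 [h3 h4]]].
  destruct (contB_rok f a b m d Hab ltac:(lra) H2) as [k1 [k2 [k3 k4]]].
  unfold rect, IV.
  rewrite (Chasles_C _ c m d), (Chasles_C (fun y => f (a, y)) c m d) by auto.
  unfold IH. ring.
Qed.

Definition holoP (f : C -> C) (P : R -> R -> Prop) : Prop :=
  forall x y, P x y -> exists l, Cder f (x, y) l.

Lemma holo_contB f a b c d :
  holoP f (fun x y => (a <= x <= b /\ (y = c \/ y = d)) \/ (c <= y <= d /\ (x = a \/ x = b))) ->
  contB f a b c d.
Proof.
  intros H. split; intros t Ht; split;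
  match goal with |- Ccont f (?x, ?y) => destruct (H x y) as [l Hl]; [tauto|]; eapply Cder_cont; eauto end.
Qed.

Lemma one_hole f a b c d a' b' c' d' :
  a <= a' -> a' <= b' -> b' <= b -> c <= c' -> c' <= d' -> d' <= d ->
  holoP f (fun x y => a <= x <= b /\ c <= y <= d /\ ~ (a' < x < b' /\ c' < y < d')) ->
  rect f a b c d = rect f a' b' c' d'.
Proof.
  intros H1 H2 H3 H4 H5 H6 H.
  assert (HB : forall a0 b0 c0 d0, a <= a0 -> a0 <= b0 -> b0 <= b -> c <= c0 -> c0 <= d0 -> d0 <= d ->
     (forall x y, a0 <= x <= b0 -> c0 <= y <= d0 -> (x = a0 \/ x = b0 \/ y = c0 \/ y = d0) -> ~ (a' < x < b' /\ c' < y < d')) ->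
     contB f a0 b0 c0 d0).
  { intros a0 b0 c0 d0 ? ? ? ? ? ? Hn. apply holo_contB. intros x y Hxy. apply H.
    repeat split; try lra; try (destruct Hxy as [[? [?|?]]|[? [?|?]]]; lra).
    apply Hn; destruct Hxy as [[? [?|?]]|[? [?|?]]]; try lra; tauto. }
  assert (HG : forall a0 b0 c0 d0, a <= a0 -> a0 <= b0 -> b0 <= b -> c <= c0 -> c0 <= d0 -> d0 <= d ->
     (forall x y, a0 <= x <= b0 -> c0 <= y <= d0 -> ~ (a' < x < b' /\ c' < y < d')) ->
     rect f a0 b0 c0 d0 = RtoC 0).
  { intros a0 b0 c0 d0 ? ? ? ? ? ? Hn. apply goursat; try lra.
    intros x y Hx Hy. apply H. repeat split; try lra. apply Hn; lra. }
  rewrite (rect_splitxB f a a' b c d) by (try lra; apply HB; try lra; intros x y ? ? ? [? ?]; lra).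
  rewrite (HG a a' c d) by (try lra; intros x y ? ? [? ?]; lra).
  rewrite (rect_splitxB f a' b' b c d) by (try lra; apply HB; try lra; intros x y ? ? ? [? ?]; lra).
  rewrite (HG b' b c d) by (try lra; intros x y ? ? [? ?]; lra).
  rewrite (rect_splityB f a' b' c c' d) by (try lra; apply HB; try lra; intros x y ? ? ? [? ?]; lra).
  rewrite (HG a' b' c c') by (try lra; intros x y ? ? [? ?]; lra).
  rewrite (rect_splityB f a' b' c' d' d) by (try lra; apply HB; try lra; intros x y ? ? ? [? ?]; lra).
  rewrite (HG a' b' d' d) by (try lra; intros x y ? ? [? ?]; lra).
  ring.
Qed.

Lemma K1 q p e : p <> 0 ->
  @is_RInt C_R_NormedModule (fun x => Cinv (x - q, p)) (q - e) (q + e) (0, - (2 * atan (e / p))).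
Proof.
  intros Hp.
  assert (Hpos : forall t, 0 < (t - q) * (t - q) + p * p).
  { intros t. assert (0 < p * p) by (apply (Rsqr_pos_lt p); auto). assert (0 <= (t - q) * (t - q)) by apply (Rle_0_sqr (t - q)). lra. }
  apply (is_RInt_fct_extend_pair (U:=R_NormedModule) (V:=R_NormedModule)); simpl.
  - apply is_RInt_ext with (fun t => (t - q) / ((t - q) * (t - q) + p * p)).
    { intros t _. simpl. field. specialize (Hpos t). lra. }
    replace 0 with (minus ((fun t => ln ((t - q) * (t - q) + p * p) / 2) (q + e))
                          ((fun t => ln ((t - q) * (t - q) + p * p) / 2) (q - e))).
    2:{ simpl. unfold minus, plus, opp; simpl.
        replace ((q + e - q) * (q + e - q) + p * p) with ((q - e - q) * (q - e - q) + p * p) by ring. ring. }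
    apply (is_RInt_derive (V:=R_CompleteNormedModule) (fun t => ln ((t - q) * (t - q) + p * p) / 2)).
    + intros t _. auto_derive. { specialize (Hpos t). lra. }
      specialize (Hpos t). field. lra.
    + intros t _. apply (ex_derive_continuous (K:=R_AbsRing) (V:=R_NormedModule)).
      auto_derive. specialize (Hpos t). lra.
  - apply is_RInt_ext with (fun t => - p / ((t - q) * (t - q) + p * p)).
    { intros t _. simpl. field. specialize (Hpos t). lra. }
    replace (- (2 * atan (e / p))) with (minus ((fun t => - atan ((t - q) / p)) (q + e))
                          ((fun t => - atan ((t - q) / p)) (q - e))).
    2:{ simpl. unfold minus, plus, opp; simpl.
        replace ((q - e - q) / p) with (- (e / p)) by (field; auto).
        replace ((q + e - q) / p) with (e / p) by (field; auto).
        rewrite atan_opp. ring. }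
    apply (is_RInt_derive (V:=R_CompleteNormedModule) (fun t => - atan ((t - q) / p))).
    + intros t _. auto_derive. { auto. }
      specialize (Hpos t). field. split; auto. lra.
    + intros t _. apply (ex_derive_continuous (K:=R_AbsRing) (V:=R_NormedModule)).
      auto_derive. specialize (Hpos t). lra.
Qed.

Lemma K2 q p e : p <> 0 ->
  @is_RInt C_R_NormedModule (fun y => Cinv (p, y - q)) (q - e) (q + e) (2 * atan (e / p), 0).
Proof.
  intros Hp.
  assert (Hpos : forall t, 0 < (t - q) * (t - q) + p * p).
  { intros t. assert (0 < p * p) by (apply (Rsqr_pos_lt p); auto). assert (0 <= (t - q) * (t - q)) by apply (Rle_0_sqr (t - q)). lra. }
  apply (is_RInt_fct_extend_pair (U:=R_NormedModule) (V:=R_NormedModule)); simpl.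
  - apply is_RInt_ext with (fun t => p / ((t - q) * (t - q) + p * p)).
    { intros t _. simpl. field. specialize (Hpos t). lra. }
    replace (2 * atan (e / p)) with (minus ((fun t => atan ((t - q) / p)) (q + e))
                          ((fun t => atan ((t - q) / p)) (q - e))).
    2:{ simpl. unfold minus, plus, opp; simpl.
        replace ((q - e - q) / p) with (- (e / p)) by (field; auto).
        replace ((q + e - q) / p) with (e / p) by (field; auto).
        rewrite atan_opp. ring. }
    apply (is_RInt_derive (V:=R_CompleteNormedModule) (fun t => atan ((t - q) / p))).
    + intros t _. auto_derive. { auto. }
      specialize (Hpos t). field. split; auto. lra.
    + intros t _. apply (ex_derive_continuous (K:=R_AbsRing) (V:=R_NormedModule)).
      auto_derive. specialize (Hpos t). lra.
  - apply is_RInt_ext with (fun t => - ((t - q) / ((t - q) * (t - q) + p * p))).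
    { intros t _. simpl. field. specialize (Hpos t). lra. }
    replace 0 with (minus ((fun t => - (ln ((t - q) * (t - q) + p * p) / 2)) (q + e))
                          ((fun t => - (ln ((t - q) * (t - q) + p * p) / 2)) (q - e))).
    2:{ simpl. unfold minus, plus, opp; simpl.
        replace ((q + e - q) * (q + e - q) + p * p) with ((q - e - q) * (q - e - q) + p * p) by ring. ring. }
    apply (is_RInt_derive (V:=R_CompleteNormedModule) (fun t => - (ln ((t - q) * (t - q) + p * p) / 2))).
    + intros t _. auto_derive. { specialize (Hpos t). lra. }
      specialize (Hpos t). field. lra.
    + intros t _. apply (ex_derive_continuous (K:=R_AbsRing) (V:=R_NormedModule)).
      auto_derive. specialize (Hpos t). lra.
Qed.

Lemma sq_inv (s : C) e : 0 < e ->
  rect (fun w => Cinv (Cminus w s)) (fst s - e) (fst s + e) (snd s - e) (snd s + e)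
  = Cmult (RtoC (2 * PI)) Ci.
Proof.
  intros He. destruct s as [sx sy]; simpl.
  assert (Hne : e <> 0) by lra. assert (Hne' : - e <> 0) by lra.
  assert (A1 : atan (e / e) = PI / 4) by (replace (e / e) with 1 by (field; auto); apply atan_1).
  assert (A2 : atan (e / - e) = - (PI / 4)) by (replace (e / - e) with (Ropp 1) by (field; auto); rewrite atan_opp, atan_1; auto).
  unfold rect, IH, IV.
  assert (B1 : forall y, y - sy <> 0 ->
     @RInt C_R_CompleteNormedModule (fun x => Cinv (Cminus (x, y) (sx, sy))) (sx - e) (sx + e)
                = (0, - (2 * atan (e / (y - sy))))).
  { intros y Hy. apply (is_RInt_unique (V:=C_R_CompleteNormedModule)).
    eapply is_RInt_ext; [|apply (K1 sx (y - sy) e Hy)].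
    intros x _. cbv beta. f_equal. }
  assert (B2 : forall x, x - sx <> 0 ->
     @RInt C_R_CompleteNormedModule (fun y => Cinv (Cminus (x, y) (sx, sy))) (sy - e) (sy + e)
                = (2 * atan (e / (x - sx)), 0)).
  { intros x Hx. apply (is_RInt_unique (V:=C_R_CompleteNormedModule)).
    eapply is_RInt_ext; [|apply (K2 sy (x - sx) e Hx)].
    intros y _. cbv beta. f_equal. }
  rewrite (B1 (sy - e)), (B1 (sy + e)), (B2 (sx + e)), (B2 (sx - e)) by lra.
  replace (sy - e - sy) with (- e) by ring. replace (sy + e - sy) with e by ring.
  replace (sx - e - sx) with (- e) by ring. replace (sx + e - sx) with e by ring.
  rewrite A1, A2. apply injective_projections; simpl; field.
Qed.

Fixpoint psumC (v : nat -> C) (N : nat) : C :=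
  match N with O => RtoC 0 | S n => Cplus (psumC v n) (v n) end.

Lemma sum_n_psum (v : nat -> C) N : @sum_n (NormedModule.AbelianMonoid R_AbsRing C_R_NormedModule) v N = psumC v (S N).
Proof.
  induction N.
  - rewrite sum_O. simpl. apply injective_projections; simpl; ring.
  - rewrite sum_Sn, IHN. reflexivity.
Qed.

Lemma series_iff (v : nat -> C) L :
  @is_series R_AbsRing C_R_NormedModule v L <->
  (forall eps, 0 < eps -> exists N, forall n, (N <= n)%nat -> Cmod (Cminus (psumC v n) L) < eps).
Proof.
  split.
  - intros H eps He. unfold is_series in H.
    destruct (proj1 (filterlim_locally _ _) H (mkposreal (eps / 2) ltac:(lra))) as [N HN].
    exists (S N). intros n Hn. destruct n as [|n]; [lia|].
    specialize (HN n ltac:(lia)). rewrite sum_n_psum in HN.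
    destruct HN as [H1 H2]. simpl in H1, H2.
    change (Rabs (fst (psumC v (S n)) - fst L) < eps / 2) in H1.
    change (Rabs (snd (psumC v (S n)) - snd L) < eps / 2) in H2.
    eapply Rle_lt_trans; [apply (Cmod_le_sum (fst (psumC v (S n)) - fst L) (snd (psumC v (S n)) - snd L))|].
    lra.
  - intros H. unfold is_series. apply filterlim_locally. intros eps.
    destruct (H eps (cond_pos eps)) as [N HN]. exists N. intros n Hn.
    rewrite sum_n_psum. apply ballCR_of_Cmod. apply HN. lia.
Qed.

Lemma series_unique (v : nat -> C) L1 L2 :
  @is_series R_AbsRing C_R_NormedModule v L1 ->
  @is_series R_AbsRing C_R_NormedModule v L2 -> L1 = L2.
Proof.
  intros H1 H2. rewrite series_iff in H1. rewrite series_iff in H2.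
  replace L2 with (Cplus L1 (Cminus L2 L1)) by ring.
  replace (Cminus L2 L1) with (RtoC 0). { apply injective_projections; simpl; ring. }
  symmetry. apply Cmod_eq_0. apply Rle_antisym; [|apply Cmod_ge_0].
  apply Rnot_lt_le. intros Hp.
  destruct (H1 (Cmod (Cminus L2 L1) / 2)) as [N1 HN1]; [lra|].
  destruct (H2 (Cmod (Cminus L2 L1) / 2)) as [N2 HN2]; [lra|].
  specialize (HN1 (N1 + N2)%nat ltac:(lia)). specialize (HN2 (N1 + N2)%nat ltac:(lia)).
  assert (X := Cmod_triangle (Cminus (psumC v (N1 + N2)) L1) (Copp (Cminus (psumC v (N1 + N2)) L2))).
  rewrite Cmod_opp in X.
  replace (Cplus (Cminus (psumC v (N1 + N2)) L1) (Copp (Cminus (psumC v (N1 + N2)) L2)))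
    with (Cminus L2 L1) in X by ring.
  lra.
Qed.

Lemma psumC_scale (v : nat -> C) k n : psumC (fun i => Cmult k (v i)) n = Cmult k (psumC v n).
Proof. induction n; simpl; [apply injective_projections; simpl; ring|rewrite IHn; ring]. Qed.

Lemma psumC_ext (v w : nat -> C) n : (forall i, v i = w i) -> psumC v n = psumC w n.
Proof. intros H; induction n; simpl; auto. rewrite IHn, H; auto. Qed.

Lemma series_scale (v : nat -> C) L k :
  @is_series R_AbsRing C_R_NormedModule v L ->
  @is_series R_AbsRing C_R_NormedModule (fun n => Cmult k (v n)) (Cmult k L).
Proof.
  intros H. apply series_iff. rewrite series_iff in H. intros eps He.
  destruct (H (eps / (Cmod k + 1))) as [N HN].
  { apply Rdiv_lt_0_compat; [lra|]. assert (X := Cmod_ge_0 k); lra. }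
  exists N. intros n Hn. rewrite psumC_scale.
  replace (Cminus (Cmult k (psumC v n)) (Cmult k L)) with (Cmult k (Cminus (psumC v n) L)) by ring.
  rewrite Cmod_mult. specialize (HN n Hn).
  assert (Hk := Cmod_ge_0 k). assert (X := Cmod_ge_0 (Cminus (psumC v n) L)).
  apply Rle_lt_trans with ((Cmod k + 1) * Cmod (Cminus (psumC v n) L)); [nra|].
  apply Rlt_le_trans with ((Cmod k + 1) * (eps / (Cmod k + 1))).
  { apply Rmult_lt_compat_l; [lra|auto]. }
  right; field; lra.
Qed.

Lemma series_ext (v w : nat -> C) L : (forall n, v n = w n) ->
  @is_series R_AbsRing C_R_NormedModule v L -> @is_series R_AbsRing C_R_NormedModule w L.
Proof.
  intros E H. apply series_iff. rewrite series_iff in H. intros eps He.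
  destruct (H eps He) as [N HN]. exists N. intros n Hn. rewrite <- (psumC_ext v w n E). auto.
Qed.

Lemma series_bdd (v : nat -> C) L :
  @is_series R_AbsRing C_R_NormedModule v L -> exists K, forall n, Cmod (v n) <= K.
Proof.
  intros H. rewrite series_iff in H. destruct (H 1 Rlt_0_1) as [N HN].
  assert (Hfin : forall M, exists K, forall n, (n <= M)%nat -> Cmod (v n) <= K).
  { induction M.
    - exists (Cmod (v O)). intros n Hn. replace n with O by lia. lra.
    - destruct IHM as [K HK]. exists (Rmax K (Cmod (v (S M)))). intros n Hn.
      destruct (Nat.eq_dec n (S M)) as [->|Hne]; [apply Rmax_r|].
      eapply Rle_trans; [apply HK; lia|apply Rmax_l]. }
  destruct (Hfin N) as [K HK]. exists (Rmax K 2). intros n.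
  destruct (le_lt_dec n N) as [Hn|Hn]; [eapply Rle_trans; [apply HK; auto|apply Rmax_l]|].
  eapply Rle_trans; [|apply Rmax_r].
  assert (A1 := HN n ltac:(lia)). assert (A2 := HN (S n) ltac:(lia)). simpl in A2.
  replace (v n) with (Cminus (Cminus (Cplus (psumC v n) (v n)) L) (Cminus (psumC v n) L)) by ring.
  unfold Cminus at 1. eapply Rle_trans; [apply Cmod_triangle|]. rewrite Cmod_opp. lra.
Qed.

Lemma psumC_diff_bound (v : nat -> C) B th N M : 0 <= th < 1 -> (N <= M)%nat ->
  (forall k, Cmod (v k) <= B * th ^ k) ->
  Cmod (Cminus (psumC v M) (psumC v N)) <= B * th ^ N / (1 - th) - B * th ^ M / (1 - th).
Proof.
  intros Hth HNM Hv. induction HNM.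
  - replace (Cminus (psumC v N) (psumC v N)) with (RtoC 0) by ring. rewrite Cmod_0. lra.
  - simpl. replace (Cminus (Cplus (psumC v m) (v m)) (psumC v N))
      with (Cplus (Cminus (psumC v m) (psumC v N)) (v m)) by ring.
    eapply Rle_trans; [apply Cmod_triangle|]. specialize (Hv m).
    replace (B * th ^ N / (1 - th) - B * (th * th ^ m) / (1 - th))
      with (B * th ^ N / (1 - th) - B * th ^ m / (1 - th) + B * th ^ m) by (field; lra).
    lra.
Qed.

Lemma series_tail (v : nat -> C) L B th : 0 <= th < 1 ->
  @is_series R_AbsRing C_R_NormedModule v L ->
  (forall k, Cmod (v k) <= B * th ^ k) ->
  forall N, Cmod (Cminus L (psumC v N)) <= B * th ^ N / (1 - th).
Proof.
  intros Hth H Hv N. rewrite series_iff in H.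
  assert (HB : 0 <= B) by (specialize (Hv O); simpl in Hv; assert (X := Cmod_ge_0 (v O)); lra).
  apply Rnot_lt_le. intros Hc.
  set (g := Cmod (Cminus L (psumC v N)) - B * th ^ N / (1 - th)).
  destruct (H g ltac:(unfold g; lra)) as [M HM].
  specialize (HM (M + N)%nat ltac:(lia)).
  assert (D := psumC_diff_bound v B th N (M + N) Hth ltac:(lia) Hv).
  assert (X := Cmod_triangle (Cminus (psumC v (M + N)) (psumC v N)) (Copp (Cminus (psumC v (M + N)) L))).
  rewrite Cmod_opp in X.
  replace (Cplus (Cminus (psumC v (M + N)) (psumC v N)) (Copp (Cminus (psumC v (M + N)) L)))
    with (Cminus L (psumC v N)) in X by ring.
  assert (0 <= B * th ^ (M + N) / (1 - th)).
  { apply Rdiv_le_0_compat; [|lra]. apply Rmult_le_pos; auto. apply pow_le; lra. }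
  unfold g in HM. lra.
Qed.

Lemma series_single (v : nat -> C) : (forall n, v (S n) = RtoC 0) ->
  @is_series R_AbsRing C_R_NormedModule v (v O).
Proof.
  intros H. apply series_iff. intros eps He. exists 1%nat. intros n Hn.
  replace (psumC v n) with (v O).
  - replace (Cminus (v O) (v O)) with (RtoC 0) by ring. rewrite Cmod_0; auto.
  - destruct n; [lia|]. clear Hn. induction n; simpl.
    + apply injective_projections; simpl; ring.
    + simpl in IHn. rewrite <- IHn, H. ring.
Qed.

Definition psumF (u : nat -> C -> C) (N : nat) (w : C) : C := psumC (fun k => u k w) N.

Lemma rect_zero a b c d : rect (fun _ => RtoC 0) a b c d = RtoC 0.
Proof.
  unfold rect, IH, IV. rewrite !(RInt_const (V:=C_R_CompleteNormedModule)).
  apply injective_projections; simpl; unfold scal; simpl; unfold prod_scal; simpl; unfold scal; simpl; unfold mult; simpl; ring.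
Qed.

Lemma rok_zero a b c d : rok (fun _ => RtoC 0) a b c d.
Proof. repeat split; apply (ex_RInt_const (V:=C_R_NormedModule)). Qed.

Lemma rok_psumF u N a b c d : (forall n, rok (u n) a b c d) -> rok (psumF u N) a b c d.
Proof.
  intros H. induction N.
  - apply rok_zero.
  - apply (rok_plus (psumF u N) (u N)); auto.
Qed.

Lemma rect_psumF u N a b c d : (forall n, rok (u n) a b c d) ->
  rect (psumF u N) a b c d = psumC (fun k => rect (u k) a b c d) N.
Proof.
  intros H. induction N.
  - apply rect_zero.
  - simpl. rewrite <- IHN. apply (rect_plus (psumF u N) (u N)); auto. apply rok_psumF; auto.
Qed.

Lemma rect_series (u : nat -> C -> C) F a b c d (e : nat -> R) : a <= b -> c <= d ->
  (forall n, rok (u n) a b c d) -> rok F a b c d ->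
  (forall eps, 0 < eps -> exists N0, forall N, (N0 <= N)%nat -> e N <= eps) ->
  (forall N, bdd (fun w => Cminus (F w) (psumF u N w)) a b c d (e N)) ->
  @is_series R_AbsRing C_R_NormedModule (fun n => rect (u n) a b c d) (rect F a b c d).
Proof.
  intros Hab Hcd Hu HF He Hb. apply series_iff. intros eps Heps.
  set (K := 2 * (b - a + (d - c)) + 1).
  destruct (He (eps / 2 / K)) as [N0 HN0]. { unfold K; apply Rdiv_lt_0_compat; lra. }
  exists N0. intros n Hn. rewrite <- rect_psumF by auto.
  rewrite <- Cmod_opp. replace (Copp (Cminus (rect (psumF u n) a b c d) (rect F a b c d)))
    with (Cminus (rect F a b c d) (rect (psumF u n) a b c d)) by ring.
  rewrite <- rect_minus by (auto; apply rok_psumF; auto).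
  eapply Rle_lt_trans; [apply rect_bound; auto|].
  { apply rok_minus; auto. apply rok_psumF; auto. }
  specialize (HN0 n Hn).
  assert (0 <= e n).
  { destruct (Hb n) as [B1 _]. destruct (B1 a ltac:(lra)) as [X _].
    assert (Y := Cmod_ge_0 (Cminus (F (a, c)) (psumF u n (a, c)))). lra. }
  apply Rle_lt_trans with (e n * (K - 1)). { unfold K. right; ring. }
  apply Rle_lt_trans with (eps / 2 / K * (K - 1)).
  { apply Rmult_le_compat_r; auto. unfold K; lra. }
  apply Rlt_le_trans with (eps / 2 / K * K). { apply Rmult_lt_compat_l; [|lra]. unfold K; apply Rdiv_lt_0_compat; lra. }
  replace (eps / 2 / K * K) with (eps / 2) by (field; unfold K; lra). lra.
Qed.

Definition hol (f : C -> C) (z : C) : Prop := exists l, Cder f z l.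

Lemma hol_cont f z : hol f z -> Ccont f z.
Proof. intros [l H]; eapply Cder_cont; eauto. Qed.

Lemma hol_mult f g z : hol f z -> hol g z -> hol (fun w => Cmult (f w) (g w)) z.
Proof. intros [l1 H1] [l2 H2]; eexists; apply Cder_mult; eauto. Qed.

Lemma hol_scale f k z : hol f z -> hol (fun w => Cmult k (f w)) z.
Proof. intros [l1 H1]; eexists; apply Cder_scale; eauto. Qed.

Lemma hol_plus f g z : hol f z -> hol g z -> hol (fun w => Cplus (f w) (g w)) z.
Proof. intros [l1 H1] [l2 H2]; eexists; apply Cder_plus; eauto. Qed.

Lemma hol_ext f g z : (forall w, f w = g w) -> hol f z -> hol g z.
Proof. intros E [l H]; exists l; eapply Cder_ext; eauto. Qed.

Lemma hol_minus f g z : hol f z -> hol g z -> hol (fun w => Cminus (f w) (g w)) z.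
Proof.
  intros H1 H2. apply (hol_ext (fun w => Cplus (f w) (Cmult (RtoC (-1)) (g w)))).
  { intros w. apply injective_projections; simpl; ring. }
  apply hol_plus; auto. apply hol_scale; auto.
Qed.

Lemma hol_const k z : hol (fun _ => k) z.
Proof. eexists; apply Cder_const. Qed.

Lemma hol_lin s z : hol (fun w => Cminus w s) z.
Proof. eexists; apply Cder_lin. Qed.

Lemma hol_invlin s z : z <> s -> hol (fun w => Cinv (Cminus w s)) z.
Proof. intros H; eexists; apply Cder_invlin; auto. Qed.

Lemma hol_pown s n z : hol (fun w => Cpown (Cminus w s) n) z.
Proof.
  destruct n. - simpl. apply hol_const. - eexists; apply Cder_pown.
Qed.

Lemma hol_powinv s n z : z <> s -> hol (fun w => Cpown (Cinv (Cminus w s)) n) z.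
Proof.
  intros H. destruct n. - simpl. apply hol_const. - eexists; apply Cder_powinv; auto.
Qed.

Lemma holB_contB f a b c d :
  (forall x y, (a <= x <= b /\ (y = c \/ y = d)) \/ (c <= y <= d /\ (x = a \/ x = b)) -> hol f (x, y)) ->
  contB f a b c d.
Proof. intros H. apply holo_contB. intros x y Hxy. apply H; auto. Qed.

Lemma holB_rok f a b c d : a <= b -> c <= d ->
  (forall x y, (a <= x <= b /\ (y = c \/ y = d)) \/ (c <= y <= d /\ (x = a \/ x = b)) -> hol f (x, y)) ->
  rok f a b c d.
Proof. intros; apply contB_rok; auto; apply holB_contB; auto. Qed.

Lemma rect_extB f g a b c d : a <= b -> c <= d ->
  (forall x y, (a <= x <= b /\ (y = c \/ y = d)) \/ (c <= y <= d /\ (x = a \/ x = b)) -> f (x, y) = g (x, y)) ->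
  rect f a b c d = rect g a b c d.
Proof.
  intros Hab Hcd H. unfold rect, IH, IV.
  rewrite (RInt_ext (V:=C_R_CompleteNormedModule) (fun x => f (x, c)) (fun x => g (x, c))),
          (RInt_ext (V:=C_R_CompleteNormedModule) (fun x => f (x, d)) (fun x => g (x, d))),
          (RInt_ext (V:=C_R_CompleteNormedModule) (fun y => f (a, y)) (fun y => g (a, y))),
          (RInt_ext (V:=C_R_CompleteNormedModule) (fun y => f (b, y)) (fun y => g (b, y))); auto;
  intros t Ht; rewrite ?Rmin_left, ?Rmax_right in Ht by lra; apply H; lra.
Qed.

Lemma Cmod_rev (u v : C) : Rabs (Cmod u - Cmod v) <= Cmod (Cminus u v).
Proof.
  apply Rabs_le. split.
  - assert (X := Cmod_triangle (Cminus v u) u). replace (Cplus (Cminus v u) u) with v in X by ring.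
    replace (Cminus v u) with (Copp (Cminus u v)) in X by ring. rewrite Cmod_opp in X. lra.
  - assert (X := Cmod_triangle (Cminus u v) v). replace (Cplus (Cminus u v) v) with u in X by ring. lra.
Qed.

Lemma cpt_h f x y : Ccont f (x, y) -> continuity_pt (fun t => Cmod (f (t, y))) x.
Proof.
  intros H eps He. destruct (H eps He) as [d [Hd Hw]]. exists d. split; auto.
  intros t [_ Ht]. unfold dist in Ht; simpl in Ht. unfold R_dist in *.
  change (Rabs (Cmod (f (t, y)) - Cmod (f (x, y))) < eps).
  eapply Rle_lt_trans; [apply Cmod_rev|]. apply Hw.
  replace (Cminus (t, y) (x, y)) with (RtoC (t - x)) by (apply injective_projections; simpl; ring).
  rewrite Cmod_R; auto.
Qed.

Lemma cpt_v f x y : Ccont f (x, y) -> continuity_pt (fun t => Cmod (f (x, t))) y.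
Proof.
  intros H eps He. destruct (H eps He) as [d [Hd Hw]]. exists d. split; auto.
  intros t [_ Ht]. unfold dist in Ht; simpl in Ht. unfold R_dist in *.
  change (Rabs (Cmod (f (x, t)) - Cmod (f (x, y))) < eps).
  eapply Rle_lt_trans; [apply Cmod_rev|]. apply Hw.
  replace (Cminus (x, t) (x, y)) with (Cmult Ci (RtoC (t - y))) by (apply injective_projections; simpl; ring).
  rewrite Cmod_mult, Cmod_Ci, Cmod_R, Rmult_1_l; auto.
Qed.

Lemma contB_bdd f a b c d : a <= b -> c <= d -> contB f a b c d -> exists M, bdd f a b c d M.
Proof.
  intros Hab Hcd [H1 H2].
  destruct (continuity_ab_maj (fun t => Cmod (f (t, c))) a b Hab) as [m1 [M1 _]].
  { intros t Ht. apply cpt_h, H1; auto. }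
  destruct (continuity_ab_maj (fun t => Cmod (f (t, d))) a b Hab) as [m2 [M2 _]].
  { intros t Ht. apply cpt_h, H1; auto. }
  destruct (continuity_ab_maj (fun t => Cmod (f (a, t))) c d Hcd) as [m3 [M3 _]].
  { intros t Ht. apply cpt_v, H2; auto. }
  destruct (continuity_ab_maj (fun t => Cmod (f (b, t))) c d Hcd) as [m4 [M4 _]].
  { intros t Ht. apply cpt_v, H2; auto. }
  exists (Rmax (Rmax (Cmod (f (m1, c))) (Cmod (f (m2, d)))) (Rmax (Cmod (f (a, m3))) (Cmod (f (b, m4))))).
  split; intros t Ht; split.
  - eapply Rle_trans; [apply M1; auto|]. eapply Rle_trans; [apply Rmax_l|apply Rmax_l].
  - eapply Rle_trans; [apply M2; auto|]. eapply Rle_trans; [apply Rmax_r|apply Rmax_l].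
  - eapply Rle_trans; [apply M3; auto|]. eapply Rle_trans; [apply Rmax_l|apply Rmax_r].
  - eapply Rle_trans; [apply M4; auto|]. eapply Rle_trans; [apply Rmax_r|apply Rmax_r].
Qed.

Lemma sqB_facts zx zy e x y : 0 < e ->
  (zx - e <= x <= zx + e /\ (y = zy - e \/ y = zy + e)) \/ (zy - e <= y <= zy + e /\ (x = zx - e \/ x = zx + e)) ->
  e <= Cmod (Cminus (x, y) (zx, zy)) /\ Cmod (Cminus (x, y) (zx, zy)) <= 2 * e.
Proof.
  intros He H.
  assert (E : Cminus (x, y) (zx, zy) = (x - zx, y - zy)) by (apply injective_projections; simpl; ring).
  rewrite E. split.
  - destruct H as [[_ [-> | ->]] | [_ [-> | ->]]].
    + eapply Rle_trans; [|apply (Cmod_snd (x - zx, zy - e - zy))]. simpl. rewrite Rabs_left1; lra.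
    + eapply Rle_trans; [|apply (Cmod_snd (x - zx, zy + e - zy))]. simpl. rewrite Rabs_right; lra.
    + eapply Rle_trans; [|apply (Cmod_fst (zx - e - zx, y - zy))]. simpl. rewrite Rabs_left1; lra.
    + eapply Rle_trans; [|apply (Cmod_fst (zx + e - zx, y - zy))]. simpl. rewrite Rabs_right; lra.
  - eapply Rle_trans; [apply Cmod_le_sum|].
    assert (Rabs (x - zx) <= e) by (apply Rabs_le; destruct H as [[? [-> | ->]] | [? [-> | ->]]]; lra).
    assert (Rabs (y - zy) <= e) by (apply Rabs_le; destruct H as [[? [-> | ->]] | [? [-> | ->]]]; lra).
    lra.
Qed.

Lemma neq_of_Cmod (u v : C) : 0 < Cmod (Cminus u v) -> u <> v.
Proof. intros H E. subst. replace (Cminus v v) with (RtoC 0) in H by ring. rewrite Cmod_0 in H. lra. Qed.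

Definition TPI : C := Cmult (RtoC (2 * PI)) Ci.

Lemma cauchy_pt f a b c d zx zy : a < zx < b -> c < zy < d ->
  (forall x y, a <= x <= b -> c <= y <= d -> hol f (x, y)) ->
  rect (fun w => Cmult (f w) (Cinv (Cminus w (zx, zy)))) a b c d = Cmult TPI (f (zx, zy)).
Proof.
  intros Hx Hy Hf. set (z := (zx, zy)).
  destruct (Hf zx zy ltac:(lra) ltac:(lra)) as [l Hl].
  destruct (Hl 1 Rlt_0_1) as [dl [Hdl Hw]].
  change (zx, zy) with z in Hw.
  set (h := fun w => Cmult (f w) (Cinv (Cminus w z))).
  set (q := fun w => Cmult (Cminus (f w) (f z)) (Cinv (Cminus w z))).
  set (Z := Cminus (rect h a b c d) (Cmult TPI (f z))).
  assert (Hl0 := Cmod_ge_0 l).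
  assert (Key : forall e, 0 < e -> 2 * e < dl -> e < zx - a -> e < b - zx -> e < zy - c -> e < d - zy ->
     Cmod Z <= 8 * (1 + Cmod l) * e).
  { intros e He H1 H2 H3 H4 H5.
    assert (HB : forall x y, (zx - e <= x <= zx + e /\ (y = zy - e \/ y = zy + e)) \/ (zy - e <= y <= zy + e /\ (x = zx - e \/ x = zx + e)) ->
               e <= Cmod (Cminus (x, y) z) /\ Cmod (Cminus (x, y) z) <= 2 * e /\ a <= x <= b /\ c <= y <= d).
    { intros x y Hxy. destruct (sqB_facts zx zy e x y He Hxy). repeat split; auto;
      destruct Hxy as [[? [-> | ->]] | [? [-> | ->]]]; lra. }
    assert (HH : holoP h (fun x y => a <= x <= b /\ c <= y <= d /\ ~ (zx - e < x < zx + e /\ zy - e < y < zy + e))).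
    { intros x y [Hx' [Hy' Hn]]. apply hol_mult; [apply Hf; auto|].
      apply hol_invlin. intro E. unfold z in E. injection E. intros E1 E2. subst. apply Hn. lra. }
    unfold Z. rewrite (one_hole h a b c d (zx - e) (zx + e) (zy - e) (zy + e)) by (auto; lra).
    rewrite (rect_ext h (fun w => Cplus (q w) (Cmult (f z) (Cinv (Cminus w z))))) by
      (try lra; intros; unfold h, q; ring).
    assert (Hrinv : rok (fun w => Cinv (Cminus w z)) (zx - e) (zx + e) (zy - e) (zy + e)).
    { apply holB_rok; try lra. intros x y Hxy. destruct (HB x y Hxy) as [X1 _].
      apply hol_invlin. apply neq_of_Cmod. lra. }
    assert (Hrq : rok q (zx - e) (zx + e) (zy - e) (zy + e)).
    { apply holB_rok; try lra. intros x y Hxy. destruct (HB x y Hxy) as [X1 [_ [X3 X4]]].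
      apply hol_mult. apply hol_minus; [apply Hf; auto|apply hol_const].
      apply hol_invlin. apply neq_of_Cmod. lra. }
    rewrite rect_plus by (auto; apply rok_mult; auto).
    rewrite rect_mult by auto.
    assert (SI := sq_inv z e He). change (fst z) with zx in SI. change (snd z) with zy in SI.
    rewrite SI. fold TPI.
    replace (Cminus (Cplus (rect q (zx - e) (zx + e) (zy - e) (zy + e)) (Cmult (f z) TPI)) (Cmult TPI (f z)))
      with (rect q (zx - e) (zx + e) (zy - e) (zy + e)) by ring.
    eapply Rle_trans; [apply (rect_bound q _ _ _ _ (1 + Cmod l)); auto; try lra|].
    - assert (K : forall x y, (zx - e <= x <= zx + e /\ (y = zy - e \/ y = zy + e)) \/ (zy - e <= y <= zy + e /\ (x = zx - e \/ x = zx + e)) ->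
                  Cmod (q (x, y)) <= 1 + Cmod l).
      { intros x y Hxy. destruct (HB x y Hxy) as [X1 [X2 _]].
        assert (Hnz : Cminus (x, y) z <> RtoC 0) by (intro E; rewrite E, Cmod_0 in X1; lra).
        unfold q. rewrite Cmod_mult, Cmod_inv by auto.
        specialize (Hw (x, y) ltac:(lra)).
        assert (T : Cmod (Cminus (f (x, y)) (f z)) <= (1 + Cmod l) * Cmod (Cminus (x, y) z)).
        { replace (Cminus (f (x, y)) (f z)) with
            (Cplus (Cminus (Cminus (f (x, y)) (f z)) (Cmult l (Cminus (x, y) z))) (Cmult l (Cminus (x, y) z))) by ring.
          eapply Rle_trans; [apply Cmod_triangle|]. rewrite Cmod_mult. lra. }
        apply Rle_trans with ((1 + Cmod l) * Cmod (Cminus (x, y) z) * / Cmod (Cminus (x, y) z)).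
        - apply Rmult_le_compat_r; auto. left; apply Rinv_0_lt_compat; lra.
        - right. field. lra. }
      split; intros t Ht; split; apply K; lra.
    - right; ring. }
  rename Key into Key0.
  assert (HZ : Z = RtoC 0).
  { apply Cmod_eq_0. apply Rle_antisym; [|apply Cmod_ge_0]. apply Rnot_lt_le. intros Hp.
    set (e := Rmin (Rmin (dl / 4) (Rmin ((zx - a) / 2) ((b - zx) / 2)))
                   (Rmin (Rmin ((zy - c) / 2) ((d - zy) / 2)) (Cmod Z / (16 * (1 + Cmod l))))).
    assert (He : 0 < e).
    { unfold e. repeat apply Rmin_glb_lt; try lra. apply Rdiv_lt_0_compat; lra. }
    assert (e <= dl / 4) by (unfold e; eapply Rle_trans; [apply Rmin_l|apply Rmin_l]).
    assert (e <= (zx - a) / 2) by (unfold e; eapply Rle_trans; [apply Rmin_l|]; eapply Rle_trans; [apply Rmin_r|apply Rmin_l]).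
    assert (e <= (b - zx) / 2) by (unfold e; eapply Rle_trans; [apply Rmin_l|]; eapply Rle_trans; [apply Rmin_r|apply Rmin_r]).
    assert (e <= (zy - c) / 2) by (unfold e; eapply Rle_trans; [apply Rmin_r|]; eapply Rle_trans; [apply Rmin_l|apply Rmin_l]).
    assert (e <= (d - zy) / 2) by (unfold e; eapply Rle_trans; [apply Rmin_r|]; eapply Rle_trans; [apply Rmin_l|apply Rmin_r]).
    assert (Hm : e <= Cmod Z / (16 * (1 + Cmod l))) by (unfold e; eapply Rle_trans; [apply Rmin_r|apply Rmin_r]).
    assert (X := Key0 e He ltac:(lra) ltac:(lra) ltac:(lra) ltac:(lra) ltac:(lra)).
    assert (8 * (1 + Cmod l) * e <= Cmod Z / 2).
    { apply Rle_trans with (8 * (1 + Cmod l) * (Cmod Z / (16 * (1 + Cmod l)))).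
      - apply Rmult_le_compat_l; lra.
      - right; field; lra. }
    lra. }
  unfold Z in HZ. replace (rect h a b c d) with (Cplus (Cminus (rect h a b c d) (Cmult TPI (f z))) (Cmult TPI (f z))) by ring.
  rewrite HZ. ring.
Qed.

Lemma Cpown_mult a b n : Cpown (Cmult a b) n = Cmult (Cpown a n) (Cpown b n).
Proof. induction n; simpl; [apply injective_projections; simpl; ring|rewrite IHn; ring]. Qed.

Lemma Cminus_neq0 (u v : C) : u <> v -> Cminus u v <> RtoC 0.
Proof. intros H E. apply H. replace u with (Cplus (Cminus u v) v) by ring. rewrite E. ring. Qed.

Lemma geo_out (z s w : C) N : w <> s -> w <> z ->
  Cminus (Cinv (Cminus w z)) (psumC (fun k => Cmult (Cpown (Cminus z s) k) (Cpown (Cinv (Cminus w s)) (S k))) N)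
  = Cmult (Cpown (Cmult (Cminus z s) (Cinv (Cminus w s))) N) (Cinv (Cminus w z)).
Proof.
  intros Hs Hz. apply Cminus_neq0 in Hs. apply Cminus_neq0 in Hz.
  induction N.
  - simpl. apply injective_projections; simpl; ring.
  - simpl psumC. set (X := psumC _ N) in *.
    assert (EX : X = Cminus (Cinv (Cminus w z)) (Cmult (Cpown (Cmult (Cminus z s) (Cinv (Cminus w s))) N) (Cinv (Cminus w z)))).
    { rewrite <- IHN. ring. }
    rewrite EX. rewrite !Cpown_mult. simpl Cpown.
    set (P := Cpown (Cminus z s) N). set (Q := Cpown (Cinv (Cminus w s)) N).
    replace (Cminus z s) with (Cminus (Cminus w s) (Cminus w z)) by ring.
    field. split; auto.
Qed.

Lemma geo_in (z s w : C) N : z <> s -> z <> w ->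
  Cminus (Cinv (Cminus z w)) (psumC (fun k => Cmult (Cpown (Cinv (Cminus z s)) (S k)) (Cpown (Cminus w s) k)) N)
  = Cmult (Cpown (Cmult (Cminus w s) (Cinv (Cminus z s))) N) (Cinv (Cminus z w)).
Proof.
  intros Hs Hz. apply Cminus_neq0 in Hs. apply Cminus_neq0 in Hz.
  induction N.
  - simpl. apply injective_projections; simpl; ring.
  - simpl psumC. set (X := psumC _ N) in *.
    assert (EX : X = Cminus (Cinv (Cminus z w)) (Cmult (Cpown (Cmult (Cminus w s) (Cinv (Cminus z s))) N) (Cinv (Cminus z w)))).
    { rewrite <- IHN. ring. }
    rewrite EX. rewrite !Cpown_mult. simpl Cpown.
    set (P := Cpown (Cminus w s) N). set (Q := Cpown (Cinv (Cminus z s)) N).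
    replace (Cminus w s) with (Cminus (Cminus z s) (Cminus z w)) by ring.
    field. split; auto.
Qed.

Lemma pow_small (r : R) : 0 <= r < 1 -> forall eps, 0 < eps -> exists N0, forall N, (N0 <= N)%nat -> r ^ N <= eps.
Proof.
  intros Hr eps He. destruct (pow_lt_1_zero r ltac:(rewrite Rabs_right; lra) eps He) as [N0 HN].
  exists N0. intros N HN'. specialize (HN N HN'). rewrite Rabs_right in HN; [lra|]. apply Rle_ge, pow_le; lra.
Qed.

Ltac neqt := first [left; intro; lra | right; intro; lra].
Ltac bdd_destr H := destruct H as [[? [-> | ->]] | [? [-> | ->]]].

Lemma pair_neq (x y a b : R) : (x <> a \/ y <> b) -> (x, y) <> (a, b).
Proof. intros [H|H] E; injection E; intros; auto. Qed.

Lemma Cinv_opp (x : C) : Cinv (Copp x) = Copp (Cinv x).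
Proof.
  destruct x as [x1 x2]. unfold Cinv, Copp; simpl.
  replace (- x1 * (- x1 * 1) + - x2 * (- x2 * 1)) with (x1 * (x1 * 1) + x2 * (x2 * 1)) by ring.
  apply injective_projections; simpl; unfold Rdiv; ring.
Qed.

Section Laurent.
Variables (f : C -> C) (sx sy T : R).
Hypothesis HT : 0 < T.
Hypothesis HF : forall x y, Rabs (x - sx) <= T -> Rabs (y - sy) <= T -> (x <> sx \/ y <> sy) -> hol f (x, y).

Definition sqr (g : C -> C) (e : R) : C := rect g (sx - e) (sx + e) (sy - e) (sy + e).

Lemma sq_indep g t t' : 0 < t -> t <= t' -> t' <= T ->
  (forall x y, Rabs (x - sx) <= T -> Rabs (y - sy) <= T -> (x <> sx \/ y <> sy) -> hol g (x, y)) ->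
  sqr g t' = sqr g t.
Proof.
  intros Ht Htt Ht' Hg. unfold sqr. apply one_hole; try lra.
  intros x y [Hx [Hy Hn]]. apply Hg; try (apply Rabs_le; lra).
  destruct (Req_dec x sx); [|left; auto]. destruct (Req_dec y sy); [|right; auto].
  exfalso; apply Hn; lra.
Qed.

Lemma cauchy_ann zx zy : 0 < Cmod (Cminus (zx, zy) (sx, sy)) < T ->
  let h := fun w => Cmult (f w) (Cinv (Cminus w (zx, zy))) in
  let t := Cmod (Cminus (zx, zy) (sx, sy)) / 4 in
  Cminus (sqr h T) (sqr h t) = Cmult TPI (f (zx, zy)).
Proof.
  intros Hd h t.
  set (d := Cmod (Cminus (zx, zy) (sx, sy))) in *.
  assert (Ez : Cminus (zx, zy) (sx, sy) = (zx - sx, zy - sy)) by (apply injective_projections; simpl; ring).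
  assert (Hdx : Rabs (zx - sx) <= d) by (unfold d; rewrite Ez; apply (Cmod_fst (zx - sx, zy - sy))).
  assert (Hdy : Rabs (zy - sy) <= d) by (unfold d; rewrite Ez; apply (Cmod_snd (zx - sx, zy - sy))).
  assert (Hds : d <= Rabs (zx - sx) + Rabs (zy - sy)) by (unfold d; rewrite Ez; apply Cmod_le_sum).
  assert (Ht : 0 < t) by (unfold t; lra).
  assert (HH : forall x y, Rabs (x - sx) <= T -> Rabs (y - sy) <= T -> (x <> sx \/ y <> sy) -> (x <> zx \/ y <> zy) -> hol h (x, y)).
  { intros x y H1 H2 H3 H4. unfold h. apply hol_mult; [apply HF; auto|]. apply hol_invlin. apply pair_neq; auto. }
  assert (HfR : forall x y, Rabs (x - sx) <= T -> Rabs (y - sy) <= T -> (x <> sx \/ y <> sy) -> hol f (x, y)) by exact HF.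
  apply Rabs_le_between in Hdx. apply Rabs_le_between in Hdy.
  destruct (Rlt_dec t (zx - sx)) as [C1|C1]; [|
  destruct (Rlt_dec t (sx - zx)) as [C2|C2]; [|
  destruct (Rlt_dec t (zy - sy)) as [C3|C3]; [|
  assert (C4 : t < sy - zy);
  [ apply Rnot_lt_le in C1, C2, C3; assert (Rabs (zx - sx) <= t) by (apply Rabs_le; lra);
    unfold t in *; destruct (Rcase_abs (zy - sy)) as [Hn|Hn];
    [rewrite (Rabs_left (zy - sy)) in Hds by lra | rewrite (Rabs_right (zy - sy)) in Hds by lra]; lra | ]]]].
  - unfold sqr. rewrite (rect_splitxB h (sx - T) (sx + t) (sx + T)); try lra.
    + rewrite (one_hole h (sx - T) (sx + t) (sy - T) (sy + T) (sx - t) (sx + t) (sy - t) (sy + t)); try lra.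
      * assert (CP : rect h (sx + t) (sx + T) (sy - T) (sy + T) = Cmult TPI (f (zx, zy))).
        { apply (cauchy_pt f (sx + t) (sx + T) (sy - T) (sy + T) zx zy); try lra.
          intros x y Hx Hy. apply HF; try (apply Rabs_le; lra). left; intro; lra. }
        rewrite CP. ring.
      * intros x y [Hx [Hy Hn]]. apply HH; try (apply Rabs_le; lra); [|left; intro; lra].
        destruct (Req_dec x sx); [|left; auto]. destruct (Req_dec y sy); [|right; auto]. exfalso; apply Hn; lra.
    + apply holB_contB. intros x y Hxy. apply HH; try (apply Rabs_le; bdd_destr Hxy; lra);
      bdd_destr Hxy; neqt.
    + apply holB_contB. intros x y Hxy. apply HH; try (apply Rabs_le; bdd_destr Hxy; lra);
      bdd_destr Hxy; neqt.
  - unfold sqr. rewrite (rect_splitxB h (sx - T) (sx - t) (sx + T)); try lra.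
    + rewrite (one_hole h (sx - t) (sx + T) (sy - T) (sy + T) (sx - t) (sx + t) (sy - t) (sy + t)); try lra.
      * assert (CP : rect h (sx - T) (sx - t) (sy - T) (sy + T) = Cmult TPI (f (zx, zy))).
        { apply (cauchy_pt f (sx - T) (sx - t) (sy - T) (sy + T) zx zy); try lra.
          intros x y Hx Hy. apply HF; try (apply Rabs_le; lra). left; intro; lra. }
        rewrite CP. ring.
      * intros x y [Hx [Hy Hn]]. apply HH; try (apply Rabs_le; lra); [|left; intro; lra].
        destruct (Req_dec x sx); [|left; auto]. destruct (Req_dec y sy); [|right; auto]. exfalso; apply Hn; lra.
    + apply holB_contB. intros x y Hxy. apply HH; try (apply Rabs_le; bdd_destr Hxy; lra);
      bdd_destr Hxy; neqt.
    + apply holB_contB. intros x y Hxy. apply HH; try (apply Rabs_le; bdd_destr Hxy; lra);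
      bdd_destr Hxy; neqt.
  - unfold sqr. rewrite (rect_splityB h (sx - T) (sx + T) (sy - T) (sy + t) (sy + T)); try lra.
    + rewrite (one_hole h (sx - T) (sx + T) (sy - T) (sy + t) (sx - t) (sx + t) (sy - t) (sy + t)); try lra.
      * assert (CP : rect h (sx - T) (sx + T) (sy + t) (sy + T) = Cmult TPI (f (zx, zy))).
        { apply (cauchy_pt f (sx - T) (sx + T) (sy + t) (sy + T) zx zy); try lra.
          intros x y Hx Hy. apply HF; try (apply Rabs_le; lra). right; intro; lra. }
        rewrite CP. ring.
      * intros x y [Hx [Hy Hn]]. apply HH; try (apply Rabs_le; lra); [|right; intro; lra].
        destruct (Req_dec x sx); [|left; auto]. destruct (Req_dec y sy); [|right; auto]. exfalso; apply Hn; lra.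
    + apply holB_contB. intros x y Hxy. apply HH; try (apply Rabs_le; bdd_destr Hxy; lra);
      bdd_destr Hxy; neqt.
    + apply holB_contB. intros x y Hxy. apply HH; try (apply Rabs_le; bdd_destr Hxy; lra);
      bdd_destr Hxy; neqt.
  - unfold sqr. rewrite (rect_splityB h (sx - T) (sx + T) (sy - T) (sy - t) (sy + T)); try lra.
    + rewrite (one_hole h (sx - T) (sx + T) (sy - t) (sy + T) (sx - t) (sx + t) (sy - t) (sy + t)); try lra.
      * assert (CP : rect h (sx - T) (sx + T) (sy - T) (sy - t) = Cmult TPI (f (zx, zy))).
        { apply (cauchy_pt f (sx - T) (sx + T) (sy - T) (sy - t) zx zy); try lra.
          intros x y Hx Hy. apply HF; try (apply Rabs_le; lra). right; intro; lra. }
        rewrite CP. ring.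
      * intros x y [Hx [Hy Hn]]. apply HH; try (apply Rabs_le; lra); [|right; intro; lra].
        destruct (Req_dec x sx); [|left; auto]. destruct (Req_dec y sy); [|right; auto]. exfalso; apply Hn; lra.
    + apply holB_contB. intros x y Hxy. apply HH; try (apply Rabs_le; bdd_destr Hxy; lra);
      bdd_destr Hxy; neqt.
    + apply holB_contB. intros x y Hxy. apply HH; try (apply Rabs_le; bdd_destr Hxy; lra);
      bdd_destr Hxy; neqt.
Qed.

Lemma bdT e x y : 0 < e <= T ->
  (sx - e <= x <= sx + e /\ (y = sy - e \/ y = sy + e)) \/ (sy - e <= y <= sy + e /\ (x = sx - e \/ x = sx + e)) ->
  Rabs (x - sx) <= T /\ Rabs (y - sy) <= T /\ (x <> sx \/ y <> sy) /\
  e <= Cmod (Cminus (x, y) (sx, sy)) /\ Cmod (Cminus (x, y) (sx, sy)) <= 2 * e.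
Proof.
  intros He H. destruct (sqB_facts sx sy e x y ltac:(lra) H) as [H1 H2].
  repeat split; auto; try (apply Rabs_le; bdd_destr H; lra). bdd_destr H; neqt.
Qed.

Lemma Cmod_diff_ge (w z s : C) : Cmod (Cminus w s) - Cmod (Cminus z s) <= Cmod (Cminus w z).
Proof.
  assert (X := Cmod_triangle (Cminus w z) (Cminus z s)).
  replace (Cplus (Cminus w z) (Cminus z s)) with (Cminus w s) in X by ring. lra.
Qed.

Lemma outer_exp zx zy : 0 < Cmod (Cminus (zx, zy) (sx, sy)) < T ->
  @is_series R_AbsRing C_R_NormedModule
    (fun n => Cmult (Cpown (Cminus (zx, zy) (sx, sy)) n)
                    (sqr (fun w => Cmult (f w) (Cpown (Cinv (Cminus w (sx, sy))) (S n))) T))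
    (sqr (fun w => Cmult (f w) (Cinv (Cminus w (zx, zy)))) T).
Proof.
  intros Hd. set (z := (zx, zy)) in *. set (s := (sx, sy)) in *. set (d := Cmod (Cminus z s)) in *.
  set (u := fun n w => Cmult (f w) (Cmult (Cpown (Cminus z s) n) (Cpown (Cinv (Cminus w s)) (S n)))).
  assert (HB : forall x y, (sx - T <= x <= sx + T /\ (y = sy - T \/ y = sy + T)) \/ (sy - T <= y <= sy + T /\ (x = sx - T \/ x = sx + T)) ->
     hol f (x, y) /\ (x, y) <> s /\ (x, y) <> z /\ T <= Cmod (Cminus (x, y) s) /\ T - d <= Cmod (Cminus (x, y) z)).
  { intros x y Hxy. destruct (bdT T x y ltac:(lra) Hxy) as [B1 [B2 [B3 [B4 B5]]]].
    assert (X := Cmod_diff_ge (x, y) z s). fold d in X. change (sx, sy) with s in B4, B5.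
    split; [apply HF; auto|]. split; [apply pair_neq; auto|].
    split; [apply neq_of_Cmod; lra|]. split; lra. }
  destruct (contB_bdd f (sx - T) (sx + T) (sy - T) (sy + T) ltac:(lra) ltac:(lra)) as [Mf HMf].
  { apply holB_contB. intros x y Hxy. apply HB; auto. }
  assert (HMf0 : 0 <= Mf).
  { destruct HMf as [H1 _]. destruct (H1 sx ltac:(lra)) as [X _]. assert (Y := Cmod_ge_0 (f (sx, sy - T))). lra. }
  assert (Hrok : forall n, rok (u n) (sx - T) (sx + T) (sy - T) (sy + T)).
  { intros n. apply holB_rok; try lra. intros x y Hxy. destruct (HB x y Hxy) as [B1 [B2 _]].
    unfold u. apply hol_mult; auto. apply hol_scale. apply hol_powinv. auto. }
  assert (Hser := rect_series u (fun w => Cmult (f w) (Cinv (Cminus w z))) (sx - T) (sx + T) (sy - T) (sy + T)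
     (fun N => Mf * (d / T) ^ N / (T - d)) ltac:(lra) ltac:(lra) Hrok).
  eapply series_ext; [|apply Hser].
  - intros n. unfold sqr. fold s z.
    rewrite <- rect_mult.
    + apply rect_ext; try lra. intros; unfold u; ring.
    + apply holB_rok; try lra. intros x y Hxy. destruct (HB x y Hxy) as [B1 [B2 _]].
      apply hol_mult; auto. apply hol_powinv. auto.
  - apply holB_rok; try lra. intros x y Hxy. destruct (HB x y Hxy) as [B1 [B2 [B3 _]]].
    apply hol_mult; auto. apply hol_invlin. auto.
  - intros eps He.
    destruct (pow_small (d / T) ltac:(split; [apply Rdiv_le_0_compat; lra|]; apply (Rmult_lt_reg_r T); [lra|]; unfold Rdiv; rewrite Rmult_assoc, Rinv_l by lra; lra)
       (eps * (T - d) / (Mf + 1))) as [N0 HN0].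
    { apply Rdiv_lt_0_compat; [apply Rmult_lt_0_compat|]; lra. }
    exists N0. intros N HN. specialize (HN0 N HN).
    apply Rle_trans with ((Mf + 1) * (eps * (T - d) / (Mf + 1)) / (T - d)).
    + unfold Rdiv at 1 3. apply Rmult_le_compat_r; [left; apply Rinv_0_lt_compat; lra|].
      apply Rmult_le_compat; try lra. apply pow_le. apply Rdiv_le_0_compat; lra.
    + right. field. lra.
  - intros N.
    assert (K : forall x y, (sx - T <= x <= sx + T /\ (y = sy - T \/ y = sy + T)) \/ (sy - T <= y <= sy + T /\ (x = sx - T \/ x = sx + T)) ->
       Cmod (Cminus (Cmult (f (x, y)) (Cinv (Cminus (x, y) z))) (psumF u N (x, y))) <= Mf * (d / T) ^ N / (T - d)).
    { intros x y Hxy. destruct (HB x y Hxy) as [B1 [B2 [B3 [B4 B5]]]].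
      unfold psumF, u. rewrite psumC_scale.
      replace (Cminus (Cmult (f (x, y)) (Cinv (Cminus (x, y) z)))
                (Cmult (f (x, y)) (psumC (fun i => Cmult (Cpown (Cminus z s) i) (Cpown (Cinv (Cminus (x, y) s)) (S i))) N)))
        with (Cmult (f (x, y)) (Cminus (Cinv (Cminus (x, y) z))
                (psumC (fun i => Cmult (Cpown (Cminus z s) i) (Cpown (Cinv (Cminus (x, y) s)) (S i))) N))) by ring.
      rewrite geo_out by auto.
      assert (Hws : Cminus (x, y) s <> RtoC 0) by (apply Cminus_neq0; auto).
      assert (Hwz : Cminus (x, y) z <> RtoC 0) by (apply Cminus_neq0; auto).
      rewrite !Cmod_mult, Cmod_Cpown, Cmod_mult, !Cmod_inv by auto. fold d.
      assert (Hfm : Cmod (f (x, y)) <= Mf).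
      { destruct HMf as [H1 H2]. bdd_destr Hxy;
        [apply H1|apply H1|apply H2|apply H2]; auto. }
      assert (Hq : d * / Cmod (Cminus (x, y) s) <= d / T).
      { unfold Rdiv. apply Rmult_le_compat_l; [lra|]. apply Rinv_le_contravar; lra. }
      assert (Hq0 : 0 <= d * / Cmod (Cminus (x, y) s)).
      { apply Rmult_le_pos; [lra|]. left; apply Rinv_0_lt_compat; lra. }
      assert (Hp : (d * / Cmod (Cminus (x, y) s)) ^ N <= (d / T) ^ N) by (apply pow_incr; lra).
      assert (Hi : / Cmod (Cminus (x, y) z) <= / (T - d)) by (apply Rinv_le_contravar; lra).
      replace (Mf * (d / T) ^ N / (T - d)) with (Mf * ((d / T) ^ N * / (T - d))) by (unfold Rdiv; ring).
      apply Rmult_le_compat; auto using Cmod_ge_0.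
      + apply Rmult_le_pos; [apply pow_le; auto|left; apply Rinv_0_lt_compat; lra].
      + apply Rmult_le_compat; auto. apply pow_le; auto. left; apply Rinv_0_lt_compat; lra. }
    split; intros t Ht; split; apply K; lra.
Qed.

Lemma inner_exp zx zy : 0 < Cmod (Cminus (zx, zy) (sx, sy)) < T ->
  let t := Cmod (Cminus (zx, zy) (sx, sy)) / 4 in
  @is_series R_AbsRing C_R_NormedModule
    (fun n => Cmult (Cinv (Cpown (Cminus (zx, zy) (sx, sy)) (S n)))
                    (sqr (fun w => Cmult (f w) (Cpown (Cminus w (sx, sy)) n)) t))
    (sqr (fun w => Cmult (f w) (Cinv (Cminus (zx, zy) w))) t).
Proof.
  intros Hd t. set (z := (zx, zy)) in *. set (s := (sx, sy)) in *. set (d := Cmod (Cminus z s)) in *.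
  assert (Et : t = d / 4) by reflexivity. clearbody t.
  assert (Ht : 0 < t) by lra.
  assert (Hzs : z <> s) by (apply neq_of_Cmod; fold d; lra).
  set (u := fun n w => Cmult (f w) (Cmult (Cpown (Cinv (Cminus z s)) (S n)) (Cpown (Cminus w s) n))).
  assert (HB : forall x y, (sx - t <= x <= sx + t /\ (y = sy - t \/ y = sy + t)) \/ (sy - t <= y <= sy + t /\ (x = sx - t \/ x = sx + t)) ->
     hol f (x, y) /\ (x, y) <> s /\ z <> (x, y) /\ Cmod (Cminus (x, y) s) <= d / 2 /\ d / 2 <= Cmod (Cminus z (x, y))).
  { intros x y Hxy. destruct (bdT t x y ltac:(lra) Hxy) as [B1 [B2 [B3 [B4 B5]]]].
    assert (X := Cmod_diff_ge z (x, y) s). fold d in X. change (sx, sy) with s in B4, B5.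
    split; [apply HF; auto|]. split; [apply pair_neq; auto|].
    split; [apply neq_of_Cmod; lra|]. split; lra. }
  destruct (contB_bdd f (sx - t) (sx + t) (sy - t) (sy + t) ltac:(lra) ltac:(lra)) as [Mf HMf].
  { apply holB_contB. intros x y Hxy. apply HB; auto. }
  assert (HMf0 : 0 <= Mf).
  { destruct HMf as [H1 _]. destruct (H1 sx ltac:(lra)) as [X _]. assert (Y := Cmod_ge_0 (f (sx, sy - t))). lra. }
  assert (Hrok : forall n, rok (u n) (sx - t) (sx + t) (sy - t) (sy + t)).
  { intros n. apply holB_rok; try lra. intros x y Hxy. destruct (HB x y Hxy) as [B1 [B2 _]].
    unfold u. apply hol_mult; auto. apply hol_scale. apply hol_pown. }
  assert (Hser := rect_series u (fun w => Cmult (f w) (Cinv (Cminus z w))) (sx - t) (sx + t) (sy - t) (sy + t)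
     (fun N => Mf * (1 / 2) ^ N * (2 / d)) ltac:(lra) ltac:(lra) Hrok).
  eapply series_ext; [|apply Hser].
  - intros n. unfold sqr. fold s z.
    rewrite <- rect_mult.
    + apply rect_ext; try lra. intros; unfold u. rewrite Cpown_inv by (apply Cminus_neq0; auto). ring.
    + apply holB_rok; try lra. intros x y Hxy. destruct (HB x y Hxy) as [B1 [B2 _]].
      apply hol_mult; auto. apply hol_pown.
  - apply holB_rok; try lra. intros x y Hxy. destruct (HB x y Hxy) as [B1 [B2 [B3 _]]].
    apply hol_mult; auto.
    apply (hol_ext (fun w => Cmult (RtoC (-1)) (Cinv (Cminus w z)))).
    { intros w. replace (Cminus z w) with (Copp (Cminus w z)) by ring. rewrite Cinv_opp.
      apply injective_projections; simpl; ring. }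
    apply hol_scale. apply hol_invlin. auto.
  - intros eps He.
    destruct (pow_small (1 / 2) ltac:(lra) (eps / ((Mf + 1) * (2 / d)))) as [N0 HN0].
    { apply Rdiv_lt_0_compat; auto. apply Rmult_lt_0_compat; [lra|apply Rdiv_lt_0_compat; lra]. }
    exists N0. intros N HN. specialize (HN0 N HN).
    assert (0 < 2 / d) by (apply Rdiv_lt_0_compat; lra).
    apply Rle_trans with ((Mf + 1) * (eps / ((Mf + 1) * (2 / d))) * (2 / d)).
    + apply Rmult_le_compat_r; [lra|]. apply Rmult_le_compat; try lra. apply pow_le; lra.
    + right. field. split; lra.
  - intros N.
    assert (K : forall x y, (sx - t <= x <= sx + t /\ (y = sy - t \/ y = sy + t)) \/ (sy - t <= y <= sy + t /\ (x = sx - t \/ x = sx + t)) ->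
       Cmod (Cminus (Cmult (f (x, y)) (Cinv (Cminus z (x, y)))) (psumF u N (x, y))) <= Mf * (1 / 2) ^ N * (2 / d)).
    { intros x y Hxy. destruct (HB x y Hxy) as [B1 [B2 [B3 [B4 B5]]]].
      unfold psumF, u. rewrite psumC_scale.
      replace (Cminus (Cmult (f (x, y)) (Cinv (Cminus z (x, y))))
                (Cmult (f (x, y)) (psumC (fun i => Cmult (Cpown (Cinv (Cminus z s)) (S i)) (Cpown (Cminus (x, y) s) i)) N)))
        with (Cmult (f (x, y)) (Cminus (Cinv (Cminus z (x, y)))
                (psumC (fun i => Cmult (Cpown (Cinv (Cminus z s)) (S i)) (Cpown (Cminus (x, y) s) i)) N))) by ring.
      rewrite geo_in by auto.
      assert (Hzs' : Cminus z s <> RtoC 0) by (apply Cminus_neq0; auto).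
      assert (Hzw : Cminus z (x, y) <> RtoC 0) by (apply Cminus_neq0; auto).
      rewrite !Cmod_mult, Cmod_Cpown, Cmod_mult, !Cmod_inv by auto. fold d.
      assert (Hfm : Cmod (f (x, y)) <= Mf).
      { destruct HMf as [H1 H2]. bdd_destr Hxy;
        [apply H1|apply H1|apply H2|apply H2]; auto. }
      assert (Hq : Cmod (Cminus (x, y) s) * / d <= 1 / 2).
      { apply Rle_trans with (d / 2 * / d). { apply Rmult_le_compat_r; auto. left; apply Rinv_0_lt_compat; lra. }
        right; field; lra. }
      assert (Hq0 : 0 <= Cmod (Cminus (x, y) s) * / d).
      { apply Rmult_le_pos; [apply Cmod_ge_0|]. left; apply Rinv_0_lt_compat; lra. }
      assert (Hp : (Cmod (Cminus (x, y) s) * / d) ^ N <= (1 / 2) ^ N) by (apply pow_incr; lra).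
      assert (Hi : / Cmod (Cminus z (x, y)) <= 2 / d).
      { apply Rle_trans with (/ (d / 2)). apply Rinv_le_contravar; lra. right; field; lra. }
      replace (Mf * (1 / 2) ^ N * (2 / d)) with (Mf * ((1 / 2) ^ N * (2 / d))) by ring.
      apply Rmult_le_compat; auto using Cmod_ge_0.
      + apply Rmult_le_pos; [apply pow_le; auto|left; apply Rinv_0_lt_compat; apply Cmod_pos; auto].
      + apply Rmult_le_compat; auto. apply pow_le; auto. left; apply Rinv_0_lt_compat; apply Cmod_pos; auto. }
    split; intros t' Ht'; split; apply K; lra.
Qed.

Definition lcoef (k : Z) : C :=
  match k with
  | Zneg p => Cmult (Cinv TPI) (sqr (fun w => Cmult (f w) (Cpown (Cminus w (sx, sy)) (Pos.to_nat p - 1))) (T / 2))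
  | _ => Cmult (Cinv TPI) (sqr (fun w => Cmult (f w) (Cpown (Cinv (Cminus w (sx, sy))) (S (Z.to_nat k)))) T)
  end.

Lemma lcoef_pos n : lcoef (Z.of_nat n) =
  Cmult (Cinv TPI) (sqr (fun w => Cmult (f w) (Cpown (Cinv (Cminus w (sx, sy))) (S n))) T).
Proof. destruct n; simpl; [reflexivity|]. rewrite SuccNat2Pos.id_succ. reflexivity. Qed.

Lemma lcoef_neg n : lcoef (- Z.of_nat (S n)) =
  Cmult (Cinv TPI) (sqr (fun w => Cmult (f w) (Cpown (Cminus w (sx, sy)) n)) (T / 2)).
Proof. simpl. rewrite SuccNat2Pos.id_succ. replace (S n - 1)%nat with n by lia. reflexivity. Qed.

Lemma laurent_exists : is_laurent_expansion f (sx, sy) lcoef.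
Proof.
  exists T. split; auto. intros [zx zy] Hz.
  set (t := Cmod (Cminus (zx, zy) (sx, sy)) / 4).
  set (h := fun w => Cmult (f w) (Cinv (Cminus w (zx, zy)))).
  exists (Cmult (Cinv TPI) (sqr h T)).
  exists (Cmult (Cinv TPI) (sqr (fun w => Cmult (f w) (Cinv (Cminus (zx, zy) w))) t)).
  assert (Ht : 0 < t) by (unfold t; lra).
  assert (Ht2 : t <= T / 2) by (unfold t; lra).
  split; [|split].
  - eapply series_ext; [|apply (series_scale _ _ (Cinv TPI) (outer_exp zx zy Hz))].
    intros n. rewrite lcoef_pos. fold h. ring.
  - eapply series_ext; [|apply (series_scale _ _ (Cinv TPI) (inner_exp zx zy Hz))].
    intros n. rewrite lcoef_neg. fold t.
    rewrite (sq_indep _ t (T / 2)); try lra.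
    + ring.
    + intros x y H1 H2 H3. apply hol_mult; [apply HF; auto|apply hol_pown].
  - assert (CA := cauchy_ann zx zy Hz). simpl in CA. fold t h in CA.
    assert (E : sqr (fun w => Cmult (f w) (Cinv (Cminus (zx, zy) w))) t = Cmult (RtoC (-1)) (sqr h t)).
    { unfold sqr. rewrite <- rect_mult.
      - apply rect_ext; try lra. intros x y _ _. unfold h.
        replace (Cminus (zx, zy) (x, y)) with (Copp (Cminus (x, y) (zx, zy))) by ring. rewrite Cinv_opp.
        apply injective_projections; simpl; ring.
      - apply holB_rok; try lra. intros x y Hxy.
        destruct (bdT t x y ltac:(lra) Hxy) as [B1 [B2 [B3 [B4 B5]]]].
        assert (X := Cmod_diff_ge (zx, zy) (x, y) (sx, sy)).
        assert (X2 : Cmod (Cminus (x, y) (zx, zy)) = Cmod (Cminus (zx, zy) (x, y))).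
        { replace (Cminus (x, y) (zx, zy)) with (Copp (Cminus (zx, zy) (x, y))) by ring. apply Cmod_opp. }
        unfold h. apply hol_mult; [apply HF; auto|]. apply hol_invlin. apply neq_of_Cmod.
        rewrite X2. unfold t in *. lra. }
    rewrite E.
    assert (HT0 : TPI <> RtoC 0).
    { unfold TPI. intro X. injection X. intros X1. assert (Y := PI_RGT_0). lra. }
    apply (f_equal (Cmult (Cinv TPI))) in CA.
    replace (f (zx, zy)) with (Cmult (Cinv TPI) (Cmult TPI (f (zx, zy)))) by (field; auto).
    rewrite <- CA. ring.
Qed.

End Laurent.

Lemma Cinv0 : Cinv (RtoC 0) = RtoC 0.
Proof. apply injective_projections; simpl; unfold Rdiv; ring. Qed.

Lemma Cinv_mult_gen (a b : C) : Cinv (Cmult a b) = Cmult (Cinv a) (Cinv b).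
Proof.
  destruct (Classical_Prop.classic (a = RtoC 0)) as [Ha|Ha].
  { subst. replace (Cmult (RtoC 0) b) with (RtoC 0) by ring. rewrite Cinv0. ring. }
  destruct (Classical_Prop.classic (b = RtoC 0)) as [Hb|Hb].
  { subst. replace (Cmult a (RtoC 0)) with (RtoC 0) by ring. rewrite Cinv0. ring. }
  field. split; auto.
Qed.

Lemma Cpown_inv_gen z n : Cinv (Cpown z n) = Cpown (Cinv z) n.
Proof.
  induction n; simpl.
  - apply injective_projections; simpl; field.
  - rewrite Cinv_mult_gen, IHn. reflexivity.
Qed.

Lemma psumC_plus (v w : nat -> C) n : psumC (fun i => Cplus (v i) (w i)) n = Cplus (psumC v n) (psumC w n).
Proof. induction n; simpl; [apply injective_projections; simpl; ring|rewrite IHn; ring]. Qed.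

Lemma rect_powinv_sq (sx sy e : R) n : 0 < e ->
  rect (fun w => Cinv (Cpown (Cminus w (sx, sy)) (S n))) (sx - e) (sx + e) (sy - e) (sy + e)
  = match n with O => TPI | _ => RtoC 0 end.
Proof.
  intros He.
  rewrite (rect_ext _ (fun w => Cpown (Cinv (Cminus w (sx, sy))) (S n))) by (try lra; intros; apply Cpown_inv_gen).
  assert (HB : forall x y, (sx - e <= x <= sx + e /\ (y = sy - e \/ y = sy + e)) \/ (sy - e <= y <= sy + e /\ (x = sx - e \/ x = sx + e)) ->
      (x, y) <> (sx, sy)).
  { intros x y Hxy. destruct (sqB_facts sx sy e x y He Hxy) as [H1 _]. apply neq_of_Cmod. lra. }
  destruct n.
  - rewrite (rect_ext _ (fun w => Cinv (Cminus w (sx, sy)))) by (try lra; intros; simpl; ring).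
    apply (sq_inv (sx, sy) e He).
  - apply (rect_primB (fun w => Cmult (Copp (Cinv (RtoC (INR (S n))))) (Cpown (Cinv (Cminus w (sx, sy))) (S n)))); try lra.
    + assert (K : forall x y, (sx - e <= x <= sx + e /\ (y = sy - e \/ y = sy + e)) \/ (sy - e <= y <= sy + e /\ (x = sx - e \/ x = sx + e)) ->
         Cder (fun w => Cmult (Copp (Cinv (RtoC (INR (S n))))) (Cpown (Cinv (Cminus w (sx, sy))) (S n))) (x, y)
              (Cpown (Cinv (Cminus (x, y) (sx, sy))) (S (S n)))).
      { intros x y Hxy. eapply Cder_l; [|apply Cder_scale, Cder_powinv, HB; auto].
        field. intro E. apply (not_0_INR (S n)); [discriminate|]. now injection E. }
      split; intros t Ht; split; apply K; lra.
    + apply holB_contB. intros x y Hxy. apply hol_powinv. apply HB; auto.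
Qed.

Lemma Rabs_le_both x e : -e <= x <= e -> Rabs x <= e.
Proof. intros; apply Rabs_le; lra. Qed.

Lemma single_pt f a b c d sx sy : a < sx < b -> c < sy < d ->
  (forall x y, a <= x <= b -> c <= y <= d -> (x <> sx \/ y <> sy) -> hol f (x, y)) ->
  rect f a b c d = Cmult TPI (residue f (sx, sy)).
Proof.
  intros Hx Hy Hf.
  set (T0 := Rmin (Rmin (sx - a) (b - sx)) (Rmin (sy - c) (d - sy))).
  assert (T1 : T0 <= sx - a) by (unfold T0; eapply Rle_trans; [apply Rmin_l|apply Rmin_l]).
  assert (T2 : T0 <= b - sx) by (unfold T0; eapply Rle_trans; [apply Rmin_l|apply Rmin_r]).
  assert (T3 : T0 <= sy - c) by (unfold T0; eapply Rle_trans; [apply Rmin_r|apply Rmin_l]).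
  assert (T4 : T0 <= d - sy) by (unfold T0; eapply Rle_trans; [apply Rmin_r|apply Rmin_r]).
  assert (HT0 : 0 < T0) by (unfold T0; repeat apply Rmin_glb_lt; lra).
  assert (HF : forall x y, Rabs (x - sx) <= T0 -> Rabs (y - sy) <= T0 -> (x <> sx \/ y <> sy) -> hol f (x, y)).
  { intros x y H1 H2 H3. apply Rabs_le_between in H1. apply Rabs_le_between in H2. apply Hf; auto; lra. }
  assert (Hex : exists c0, exists a0, is_laurent_expansion f (sx, sy) a0 /\ a0 (-1)%Z = c0).
  { exists (lcoef f sx sy T0 (-1)%Z), (lcoef f sx sy T0). split; auto. apply laurent_exists; auto. }
  unfold residue.
  destruct (epsilon_spec (inhabits (RtoC 0))
     (fun c0 => exists a0, is_laurent_expansion f (sx, sy) a0 /\ a0 (-1)%Z = c0) Hex) as [al [Hl Hres]].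
  rewrite <- Hres. clear Hres Hex.
  destruct Hl as [r [Hr Hl]].
  set (s := (sx, sy)) in *.
  set (e := Rmin (T0 / 2) (r / 8)).
  assert (He1 : e <= T0 / 2) by apply Rmin_l. assert (He2 : e <= r / 8) by apply Rmin_r.
  assert (He : 0 < e) by (unfold e; apply Rmin_glb_lt; lra).
  rewrite (one_hole f a b c d (sx - e) (sx + e) (sy - e) (sy + e)); try lra.
  2:{ intros x y [H1 [H2 H3]]. apply Hf; auto.
      destruct (Req_dec x sx); [|left; auto]. destruct (Req_dec y sy); [|right; auto]. exfalso; apply H3; lra. }
  assert (Ez : forall q, Cminus (sx + q, sy) s = RtoC q) by (intros; apply injective_projections; simpl; ring).
  destruct (Hl (sx + r / 2, sy)) as [p1 [q1 [S1 _]]].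
  { rewrite Ez, Cmod_R, Rabs_right; lra. }
  destruct (series_bdd _ _ S1) as [K1 HK1].
  destruct (Hl (sx + e / 2, sy)) as [p2 [q2 [_ [S2 _]]]].
  { rewrite Ez, Cmod_R, Rabs_right; lra. }
  destruct (series_bdd _ _ S2) as [K2 HK2].
  rewrite Ez in HK1, HK2.
  assert (HK1' : forall n, Cmod (al (Z.of_nat n)) * (r / 2) ^ n <= K1).
  { intros n. specialize (HK1 n). rewrite Cmod_mult, Cmod_Cpown, Cmod_R, Rabs_right in HK1 by lra. auto. }
  assert (HK2' : forall n, Cmod (al (- Z.of_nat (S n))%Z) * / (e / 2) ^ (S n) <= K2).
  { intros n. specialize (HK2 n). rewrite Cmod_mult, Cmod_inv, Cmod_Cpown, Cmod_R, Rabs_right in HK2; auto; try lra.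
    apply Cpown_neq0. intro X; injection X; lra. }
  assert (K10 : 0 <= K1) by (specialize (HK1' O); simpl in HK1'; assert (X := Cmod_ge_0 (al 0%Z)); lra).
  assert (K20 : 0 <= K2).
  { specialize (HK2' O). assert (X := Cmod_ge_0 (al (- Z.of_nat 1)%Z)).
    assert (0 <= / (e / 2) ^ 1) by (left; apply Rinv_0_lt_compat; apply pow_lt; lra). nra. }
  set (u := fun n w => Cplus (Cmult (al (Z.of_nat n)) (Cpown (Cminus w s) n))
                             (Cmult (al (- Z.of_nat (S n))%Z) (Cinv (Cpown (Cminus w s) (S n))))).
  assert (HB : forall x y, (sx - e <= x <= sx + e /\ (y = sy - e \/ y = sy + e)) \/ (sy - e <= y <= sy + e /\ (x = sx - e \/ x = sx + e)) ->
     hol f (x, y) /\ (x, y) <> s /\ e <= Cmod (Cminus (x, y) s) /\ Cmod (Cminus (x, y) s) <= 2 * e).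
  { intros x y Hxy. destruct (sqB_facts sx sy e x y He Hxy) as [B1 B2].
    change (sx, sy) with s in B1, B2.
    split; [|split; [apply neq_of_Cmod; lra|split; auto]].
    apply Hf; try (bdd_destr Hxy; lra); bdd_destr Hxy; neqt. }
  assert (Hrok : forall n, rok (u n) (sx - e) (sx + e) (sy - e) (sy + e)).
  { intros n. apply holB_rok; try lra. intros x y Hxy. destruct (HB x y Hxy) as [_ [B2 _]].
    unfold u. apply hol_plus; apply hol_scale; [apply hol_pown|].
    apply (hol_ext (fun w => Cpown (Cinv (Cminus w s)) (S n))); [intros; symmetry; apply Cpown_inv_gen|].
    apply hol_powinv; auto. }
  assert (Hser := rect_series u f (sx - e) (sx + e) (sy - e) (sy + e)
     (fun N => 2 * (K1 + K2) * (1 / 2) ^ N) ltac:(lra) ltac:(lra) Hrok).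
  assert (Hv : forall n, rect (u n) (sx - e) (sx + e) (sy - e) (sy + e) =
       Cmult (al (- Z.of_nat (S n))%Z) (match n with O => TPI | _ => RtoC 0 end)).
  { intros n. unfold u. assert (RP := rect_powinv_sq sx sy e n He). change (sx, sy) with s in RP.
    rewrite rect_plus, !rect_mult, rect_pown, RP; try lra.
    - ring.
    - apply holB_rok; try lra. intros x y Hxy. destruct (HB x y Hxy) as [_ [B2 _]].
      apply (hol_ext (fun w => Cpown (Cinv (Cminus w s)) (S n))); [intros; symmetry; apply Cpown_inv_gen|].
      apply hol_powinv; auto.
    - apply holB_rok; try lra. intros; apply hol_pown.
    - apply rok_mult. apply holB_rok; try lra. intros; apply hol_pown.
    - apply rok_mult. apply holB_rok; try lra. intros x y Hxy. destruct (HB x y Hxy) as [_ [B2 _]].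
      apply (hol_ext (fun w => Cpown (Cinv (Cminus w s)) (S n))); [intros; symmetry; apply Cpown_inv_gen|].
      apply hol_powinv; auto. }
  assert (Hfs : @is_series R_AbsRing C_R_NormedModule (fun n => rect (u n) (sx - e) (sx + e) (sy - e) (sy + e))
                 (rect f (sx - e) (sx + e) (sy - e) (sy + e))).
  { apply Hser.
    - apply holB_rok; try lra. intros x y Hxy. apply HB; auto.
    - intros eps Heps. destruct (pow_small (1 / 2) ltac:(lra) (eps / (2 * (K1 + K2) + 1))) as [N0 HN0].
      { apply Rdiv_lt_0_compat; lra. }
      exists N0. intros N HN. specialize (HN0 N HN).
      apply Rle_trans with (2 * (K1 + K2) * (eps / (2 * (K1 + K2) + 1))).
      + apply Rmult_le_compat_l; lra.
      + apply Rle_trans with ((2 * (K1 + K2) + 1) * (eps / (2 * (K1 + K2) + 1))).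
        * apply Rmult_le_compat_r; [left; apply Rdiv_lt_0_compat; lra|lra].
        * right; field; lra.
    - intros N.
      assert (K : forall x y, (sx - e <= x <= sx + e /\ (y = sy - e \/ y = sy + e)) \/ (sy - e <= y <= sy + e /\ (x = sx - e \/ x = sx + e)) ->
         Cmod (Cminus (f (x, y)) (psumF u N (x, y))) <= 2 * (K1 + K2) * (1 / 2) ^ N).
      { intros x y Hxy. destruct (HB x y Hxy) as [B1 [B2 [B3 B4]]].
        destruct (Hl (x, y)) as [p [q [Sp [Sq Ef]]]]. { split; lra. }
        set (m := Cmod (Cminus (x, y) s)) in *.
        assert (Hm : 0 < m) by lra.
        assert (Bd1 : forall k, Cmod (Cmult (al (Z.of_nat k)) (Cpown (Cminus (x, y) s) k)) <= K1 * (1 / 2) ^ k).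
        { intros k. rewrite Cmod_mult, Cmod_Cpown. fold m.
          apply Rle_trans with (Cmod (al (Z.of_nat k)) * (r / 2) ^ k * (1 / 2) ^ k).
          - rewrite Rmult_assoc, <- Rpow_mult_distr. apply Rmult_le_compat_l; [apply Cmod_ge_0|].
            apply pow_incr. lra.
          - apply Rmult_le_compat_r; [apply pow_le; lra|]. apply HK1'. }
        assert (Bd2 : forall k, Cmod (Cmult (al (- Z.of_nat (S k))%Z) (Cinv (Cpown (Cminus (x, y) s) (S k)))) <= K2 * (1 / 2) ^ k).
        { intros k. rewrite Cmod_mult, Cmod_inv, Cmod_Cpown by (apply Cpown_neq0; apply Cminus_neq0; auto). fold m.
          apply Rle_trans with (Cmod (al (- Z.of_nat (S k))%Z) * / (e / 2) ^ (S k) * (1 / 2) ^ (S k)).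
          - rewrite Rmult_assoc. apply Rmult_le_compat_l; [apply Cmod_ge_0|].
            replace (/ (e / 2) ^ S k * (1 / 2) ^ S k) with (/ e ^ S k).
            + apply Rinv_le_contravar; [apply pow_lt; lra|]. apply pow_incr; lra.
            + replace ((e / 2) ^ S k) with (e ^ S k * (1 / 2) ^ S k) by (rewrite <- Rpow_mult_distr; f_equal; field).
              field. split; apply pow_nonzero; lra.
          - apply Rle_trans with (K2 * (1 / 2) ^ S k).
            + apply Rmult_le_compat_r; [apply pow_le; lra|]. apply HK2'.
            + apply Rmult_le_compat_l; auto. simpl. assert (0 <= (1/2) ^ k) by (apply pow_le; lra). lra. }
        assert (Tl1 := series_tail _ _ K1 (1 / 2) ltac:(lra) Sp Bd1 N).
        assert (Tl2 := series_tail _ _ K2 (1 / 2) ltac:(lra) Sq Bd2 N).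
        unfold psumF, u. rewrite psumC_plus. rewrite Ef.
        replace (Cminus (Cplus p q) (Cplus (psumC (fun i => Cmult (al (Z.of_nat i)) (Cpown (Cminus (x, y) s) i)) N)
                   (psumC (fun i => Cmult (al (- Z.of_nat (S i))%Z) (Cinv (Cpown (Cminus (x, y) s) (S i)))) N)))
          with (Cplus (Cminus p (psumC (fun i => Cmult (al (Z.of_nat i)) (Cpown (Cminus (x, y) s) i)) N))
                      (Cminus q (psumC (fun i => Cmult (al (- Z.of_nat (S i))%Z) (Cinv (Cpown (Cminus (x, y) s) (S i)))) N)))
          by ring.
        eapply Rle_trans; [apply Cmod_triangle|].
        replace (2 * (K1 + K2) * (1 / 2) ^ N) with (K1 * (1 / 2) ^ N / (1 - 1 / 2) + K2 * (1 / 2) ^ N / (1 - 1 / 2)) by field.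
        apply Rplus_le_compat; auto. }
      split; intros t Ht; split; apply K; lra. }
  assert (Hs1 := series_single (fun n => rect (u n) (sx - e) (sx + e) (sy - e) (sy + e))).
  rewrite (series_unique _ _ _ Hfs (Hs1 ltac:(intros n; cbv beta; rewrite Hv; ring))).
  cbv beta. rewrite Hv. simpl. ring.
Qed.

Lemma avoid_pt (l : list R) : forall u v, u < v -> exists m, u < m < v /\ forall h, In h l -> h <> m.
Proof.
  induction l as [|h l IH]; intros u v Huv.
  - exists ((u + v) / 2). split; [lra|]. intros h [].
  - destruct (Rlt_dec u h) as [H1|H1]; [destruct (Rlt_dec h v) as [H2|H2]|].
    + destruct (IH u h H1) as [m [Hm Hl]]. exists m. split; [lra|].
      intros h' [<-|Hh']; [lra|auto].
    + destruct (IH u v Huv) as [m [Hm Hl]]. exists m. split; auto.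
      intros h' [<-|Hh']; [lra|auto].
    + destruct (IH u v Huv) as [m [Hm Hl]]. exists m. split; auto.
      intros h' [<-|Hh']; [lra|auto].
Qed.

Lemma filter_len {A} (p : A -> bool) (l : list A) :
  (length (filter p l) + length (filter (fun x => negb (p x)) l))%nat = length l.
Proof. induction l; simpl; auto. destruct (p a); simpl; lia. Qed.

Lemma Csum_filter {A} (g : A -> C) (p : A -> bool) (l : list A) :
  Csum (map g l) = Cplus (Csum (map g (filter p l))) (Csum (map g (filter (fun x => negb (p x)) l))).
Proof.
  induction l; simpl.
  - apply injective_projections; simpl; ring.
  - destruct (p a); simpl; rewrite IHl; ring.
Qed.

Lemma filter_nonempty {A} (p : A -> bool) (l : list A) x : In x l -> p x = true -> (0 < length (filter p l))%nat.
Proof.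
  intros H Hp. assert (In x (filter p l)) by (apply filter_In; auto).
  destruct (filter p l); simpl in *; [contradiction|lia].
Qed.

Definition ltb_x (m : R) (s : C) : bool := if Rlt_dec (fst s) m then true else false.
Definition ltb_y (m : R) (s : C) : bool := if Rlt_dec (snd s) m then true else false.

Lemma multi_pt_n n : forall f (L : list C) a b c d, (length L <= n)%nat -> a <= b -> c <= d -> NoDup L ->
  (forall s, In s L -> a < fst s < b /\ c < snd s < d) ->
  (forall x y, a <= x <= b -> c <= y <= d -> ~ In (x, y) L -> hol f (x, y)) ->
  rect f a b c d = Cmult TPI (Csum (map (residue f) L)).
Proof.
  induction n as [|n IH]; intros f L a b c d Hlen Hab Hcd HND HL Hf.
  - destruct L; [|simpl in Hlen; lia]. simpl.
    rewrite goursat; auto. apply injective_projections; simpl; ring.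
    intros x y Hx Hy. apply Hf; auto.
  - destruct L as [|s0 [|s1 rest]].
    + simpl. rewrite goursat; auto. apply injective_projections; simpl; ring.
      intros x y Hx Hy. apply Hf; auto.
    + simpl. destruct s0 as [sx sy]. destruct (HL (sx, sy) (or_introl eq_refl)) as [[H1 H2] [H3 H4]]; simpl in *.
      rewrite (single_pt f a b c d sx sy); auto.
      * ring.
      * intros x y Hx Hy Hn. apply Hf; auto. intros [E|[]]. injection E; intros; subst.
        destruct Hn; auto.
    + assert (Hne : s0 <> s1) by (inversion HND; subst; intro E; subst; apply H1; left; auto).
      set (L := s0 :: s1 :: rest) in *.
      destruct (Req_dec (fst s0) (fst s1)) as [Ex|Ex].
      *
        assert (Ey : snd s0 <> snd s1).
        { intro E. apply Hne. destruct s0, s1; simpl in *; subst; auto. }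
        destruct (avoid_pt (map snd L) (Rmin (snd s0) (snd s1)) (Rmax (snd s0) (snd s1))) as [m [Hm Hav]].
        { destruct (Rle_dec (snd s0) (snd s1)); [rewrite Rmin_left, Rmax_right by lra|rewrite Rmin_right, Rmax_left by lra]; lra. }
        assert (Hm0 : forall s, In s L -> snd s <> m) by (intros s Hs; apply Hav, in_map; auto).
        assert (Hmc : c < m < d).
        { destruct (HL s0) as [_ [? ?]]; [left; auto|]. destruct (HL s1) as [_ [? ?]]; [right; left; auto|].
          split; [apply Rle_lt_trans with (Rmin (snd s0) (snd s1)); [apply Rmin_glb; lra|lra]
                 |apply Rlt_le_trans with (Rmax (snd s0) (snd s1)); [lra|apply Rmax_lub; lra]]. }
        set (L1 := filter (ltb_y m) L). set (L2 := filter (fun x => negb (ltb_y m x)) L).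
        assert (In1 : forall s, In s L1 <-> In s L /\ snd s < m).
        { intros s. unfold L1. rewrite filter_In. unfold ltb_y. destruct (Rlt_dec (snd s) m); intuition; discriminate. }
        assert (In2 : forall s, In s L2 <-> In s L /\ m < snd s).
        { intros s. unfold L2. rewrite filter_In. unfold ltb_y. destruct (Rlt_dec (snd s) m) as [Hlt|Hlt]; simpl.
          - split; [intros [_ X]; discriminate | intros [_ X]; lra].
          - split; [intros [A _]; split; auto; assert (snd s <> m) by (apply Hm0; auto); lra | intros [A _]; split; auto]. }
        assert (Hlen12 := filter_len (ltb_y m) L). fold L1 L2 in Hlen12.
        assert (HminL : exists s, In s L /\ snd s < m).
        { destruct (Rle_dec (snd s0) (snd s1)); [exists s0|exists s1]; split; try (simpl; tauto);
          [rewrite Rmin_left in Hm by lra|rewrite Rmin_right in Hm by lra]; lra. }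
        assert (HmaxL : exists s, In s L /\ m < snd s).
        { destruct (Rle_dec (snd s0) (snd s1)); [exists s1|exists s0]; split; try (simpl; tauto);
          [rewrite Rmax_right in Hm by lra|rewrite Rmax_left in Hm by lra]; lra. }
        destruct HminL as [sa [Ha1 Ha2]]. destruct HmaxL as [sb [Hb1 Hb2]].
        assert (l1 : (0 < length L1)%nat).
        { apply (filter_nonempty _ L sa Ha1). unfold ltb_y. destruct (Rlt_dec (snd sa) m); auto; lra. }
        assert (l2 : (0 < length L2)%nat).
        { apply (filter_nonempty _ L sb Hb1). unfold ltb_y. destruct (Rlt_dec (snd sb) m); auto; lra. }
        assert (HHb : forall x y, a <= x <= b -> (y = c \/ y = d \/ y = m) -> hol f (x, y)).
        { intros x y Hx Hy. apply Hf; auto; [destruct Hy as [->|[->| ->]]; lra|].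
          intros Hin. destruct (HL _ Hin) as [_ [Y1 Y2]]. simpl in Y1, Y2. destruct Hy as [->|[->| ->]]; try lra.
          apply (Hm0 _ Hin). reflexivity. }
        rewrite (rect_splityB f a b c m d); try lra.
        2:{ apply holB_contB. intros x y Hxy. destruct Hxy as [[Hx [->| ->]]|[Hy [-> | ->]]].
            - apply HHb; auto. - apply HHb; auto.
            - apply Hf; try lra. intros Hin. destruct (HL _ Hin) as [[Y1 _] _]. simpl in Y1. lra.
            - apply Hf; try lra. intros Hin. destruct (HL _ Hin) as [[_ Y1] _]. simpl in Y1. lra. }
        2:{ apply holB_contB. intros x y Hxy. destruct Hxy as [[Hx [->| ->]]|[Hy [-> | ->]]].
            - apply HHb; auto. - apply HHb; auto.
            - apply Hf; try lra. intros Hin. destruct (HL _ Hin) as [[Y1 _] _]. simpl in Y1. lra.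
            - apply Hf; try lra. intros Hin. destruct (HL _ Hin) as [[_ Y1] _]. simpl in Y1. lra. }
        assert (len1 : (length L1 <= n)%nat) by lia.
        assert (len2 : (length L2 <= n)%nat) by lia.
        assert (ND1 : NoDup L1) by (apply NoDup_filter; auto).
        assert (ND2 : NoDup L2) by (apply NoDup_filter; auto).
        assert (HL1 : forall s, In s L1 -> a < fst s < b /\ c < snd s < m).
        { intros s Hs. apply In1 in Hs. destruct Hs as [Hs1 Hs2]. destruct (HL s Hs1). lra. }
        assert (HL2 : forall s, In s L2 -> a < fst s < b /\ m < snd s < d).
        { intros s Hs. apply In2 in Hs. destruct Hs as [Hs1 Hs2]. destruct (HL s Hs1). lra. }
        assert (Hf1 : forall x y, a <= x <= b -> c <= y <= m -> ~ In (x, y) L1 -> hol f (x, y)).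
        { intros x y Hx Hy Hn. apply Hf; try lra. intros Hin.
          destruct (Req_dec y m) as [->|Hym]; [apply (Hm0 _ Hin); reflexivity|].
          apply Hn. apply In1. split; auto. simpl. lra. }
        assert (Hf2 : forall x y, a <= x <= b -> m <= y <= d -> ~ In (x, y) L2 -> hol f (x, y)).
        { intros x y Hx Hy Hn. apply Hf; try lra. intros Hin.
          destruct (Req_dec y m) as [->|Hym]; [apply (Hm0 _ Hin); reflexivity|].
          apply Hn. apply In2. split; auto. simpl. lra. }
        rewrite (IH f L1 a b c m len1 Hab ltac:(lra) ND1 HL1 Hf1).
        rewrite (IH f L2 a b m d len2 Hab ltac:(lra) ND2 HL2 Hf2).
        rewrite (Csum_filter (residue f) (ltb_y m) L). fold L1 L2. ring.
      * destruct (avoid_pt (map fst L) (Rmin (fst s0) (fst s1)) (Rmax (fst s0) (fst s1))) as [m [Hm Hav]].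
        { destruct (Rle_dec (fst s0) (fst s1)); [rewrite Rmin_left, Rmax_right by lra|rewrite Rmin_right, Rmax_left by lra]; lra. }
        assert (Hm0 : forall s, In s L -> fst s <> m) by (intros s Hs; apply Hav, in_map; auto).
        assert (Hmc : a < m < b).
        { destruct (HL s0) as [[? ?] _]; [left; auto|]. destruct (HL s1) as [[? ?] _]; [right; left; auto|].
          split; [apply Rle_lt_trans with (Rmin (fst s0) (fst s1)); [apply Rmin_glb; lra|lra]
                 |apply Rlt_le_trans with (Rmax (fst s0) (fst s1)); [lra|apply Rmax_lub; lra]]. }
        set (L1 := filter (ltb_x m) L). set (L2 := filter (fun x => negb (ltb_x m x)) L).
        assert (In1 : forall s, In s L1 <-> In s L /\ fst s < m).
        { intros s. unfold L1. rewrite filter_In. unfold ltb_x. destruct (Rlt_dec (fst s) m); intuition; discriminate. }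
        assert (In2 : forall s, In s L2 <-> In s L /\ m < fst s).
        { intros s. unfold L2. rewrite filter_In. unfold ltb_x. destruct (Rlt_dec (fst s) m) as [Hlt|Hlt]; simpl.
          - split; [intros [_ X]; discriminate | intros [_ X]; lra].
          - split; [intros [A _]; split; auto; assert (fst s <> m) by (apply Hm0; auto); lra | intros [A _]; split; auto]. }
        assert (Hlen12 := filter_len (ltb_x m) L). fold L1 L2 in Hlen12.
        assert (HminL : exists s, In s L /\ fst s < m).
        { destruct (Rle_dec (fst s0) (fst s1)); [exists s0|exists s1]; split; try (simpl; tauto);
          [rewrite Rmin_left in Hm by lra|rewrite Rmin_right in Hm by lra]; lra. }
        assert (HmaxL : exists s, In s L /\ m < fst s).
        { destruct (Rle_dec (fst s0) (fst s1)); [exists s1|exists s0]; split; try (simpl; tauto);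
          [rewrite Rmax_right in Hm by lra|rewrite Rmax_left in Hm by lra]; lra. }
        destruct HminL as [sa [Ha1 Ha2]]. destruct HmaxL as [sb [Hb1 Hb2]].
        assert (l1 : (0 < length L1)%nat).
        { apply (filter_nonempty _ L sa Ha1). unfold ltb_x. destruct (Rlt_dec (fst sa) m); auto; lra. }
        assert (l2 : (0 < length L2)%nat).
        { apply (filter_nonempty _ L sb Hb1). unfold ltb_x. destruct (Rlt_dec (fst sb) m); auto; lra. }
        assert (HHb : forall x y, c <= y <= d -> (x = a \/ x = b \/ x = m) -> hol f (x, y)).
        { intros x y Hy Hx. apply Hf; auto; [destruct Hx as [->|[->| ->]]; lra|].
          intros Hin. destruct (HL _ Hin) as [[Y1 Y2] _]. simpl in Y1, Y2. destruct Hx as [->|[->| ->]]; try lra.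
          apply (Hm0 _ Hin). reflexivity. }
        rewrite (rect_splitxB f a m b c d); try lra.
        2:{ apply holB_contB. intros x y Hxy. destruct Hxy as [[Hx [->| ->]]|[Hy [-> | ->]]].
            - apply Hf; try lra. intros Hin. destruct (HL _ Hin) as [_ [Y1 _]]. simpl in Y1. lra.
            - apply Hf; try lra. intros Hin. destruct (HL _ Hin) as [_ [_ Y1]]. simpl in Y1. lra.
            - apply HHb; auto. - apply HHb; auto. }
        2:{ apply holB_contB. intros x y Hxy. destruct Hxy as [[Hx [->| ->]]|[Hy [-> | ->]]].
            - apply Hf; try lra. intros Hin. destruct (HL _ Hin) as [_ [Y1 _]]. simpl in Y1. lra.
            - apply Hf; try lra. intros Hin. destruct (HL _ Hin) as [_ [_ Y1]]. simpl in Y1. lra.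
            - apply HHb; auto. - apply HHb; auto. }
        assert (len1 : (length L1 <= n)%nat) by lia.
        assert (len2 : (length L2 <= n)%nat) by lia.
        assert (ND1 : NoDup L1) by (apply NoDup_filter; auto).
        assert (ND2 : NoDup L2) by (apply NoDup_filter; auto).
        assert (HL1 : forall s, In s L1 -> a < fst s < m /\ c < snd s < d).
        { intros s Hs. apply In1 in Hs. destruct Hs as [Hs1 Hs2]. destruct (HL s Hs1). lra. }
        assert (HL2 : forall s, In s L2 -> m < fst s < b /\ c < snd s < d).
        { intros s Hs. apply In2 in Hs. destruct Hs as [Hs1 Hs2]. destruct (HL s Hs1). lra. }
        assert (Hf1 : forall x y, a <= x <= m -> c <= y <= d -> ~ In (x, y) L1 -> hol f (x, y)).
        { intros x y Hx Hy Hn. apply Hf; try lra. intros Hin.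
          destruct (Req_dec x m) as [->|Hxm]; [apply (Hm0 _ Hin); reflexivity|].
          apply Hn. apply In1. split; auto. simpl. lra. }
        assert (Hf2 : forall x y, m <= x <= b -> c <= y <= d -> ~ In (x, y) L2 -> hol f (x, y)).
        { intros x y Hx Hy Hn. apply Hf; try lra. intros Hin.
          destruct (Req_dec x m) as [->|Hxm]; [apply (Hm0 _ Hin); reflexivity|].
          apply Hn. apply In2. split; auto. simpl. lra. }
        rewrite (IH f L1 a m c d len1 ltac:(lra) Hcd ND1 HL1 Hf1).
        rewrite (IH f L2 m b c d len2 ltac:(lra) Hcd ND2 HL2 Hf2).
        rewrite (Csum_filter (residue f) (ltb_x m) L). fold L1 L2. ring.
Qed.

Lemma list_bound (S : list C) : exists K, 0 < K /\ forall s, In s S -> Rabs (fst s) < K /\ Rabs (snd s) < K.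
Proof.
  induction S as [|s S IH].
  - exists 1. split; [lra|]. intros s [].
  - destruct IH as [K [HK H]]. exists (Rmax K (Rabs (fst s) + Rabs (snd s) + 1)). split.
    + eapply Rlt_le_trans; [apply HK|apply Rmax_l].
    + intros s' [<-|Hs'].
      * assert (X := Rmax_r K (Rabs (fst s) + Rabs (snd s) + 1)).
        assert (Y1 := Rabs_pos (fst s)). assert (Y2 := Rabs_pos (snd s)). lra.
      * destruct (H s' Hs'). assert (X := Rmax_l K (Rabs (fst s) + Rabs (snd s) + 1)). lra.
Qed.

Lemma ball_Cmod (l y : C) e : @ball C_R_NormedModule l e y -> Cmod (Cminus y l) < 2 * e.
Proof.
  intros [H1 H2]. change (Rabs (fst y - fst l) < e) in H1. change (Rabs (snd y - snd l) < e) in H2.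
  eapply Rle_lt_trans; [apply (Cmod_le_sum (fst y - fst l) (snd y - snd l))|]. lra.
Qed.

Lemma extract_gen (g : R -> C) (l : C) :
  @is_RInt_gen C_R_NormedModule g (at_point 0) (Rbar_locally p_infty) l ->
  forall eps, 0 < eps -> exists M, forall Y, M < Y ->
    Cmod (Cminus (@RInt C_R_CompleteNormedModule g 0 Y) l) < eps.
Proof.
  intros H eps He.
  destruct (H (ball l (eps / 2)) (locally_ball l (mkposreal (eps / 2) ltac:(lra)))) as [Q R HQ [M HM] HP].
  exists M. intros Y HY. destruct (HP 0 Y HQ (HM Y HY)) as [y [Hy Hb]].
  simpl in Hy. rewrite (is_RInt_unique (V:=C_R_CompleteNormedModule) _ _ _ _ Hy).
  apply ball_Cmod in Hb. lra.
Qed.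

Lemma extract_p (h : R -> C) (l : C) :
  @filterlim R C_R_NormedModule h (Rbar_locally p_infty) (locally l) ->
  forall eps, 0 < eps -> exists M, forall x, M < x -> Cmod (Cminus (h x) l) < eps.
Proof.
  intros H eps He.
  destruct (H (ball l (eps / 2)) (locally_ball l (mkposreal (eps / 2) ltac:(lra)))) as [M HM].
  exists M. intros x Hx. specialize (HM x Hx). apply ball_Cmod in HM. simpl in HM. lra.
Qed.

Lemma extract_m (h : R -> C) (l : C) :
  @filterlim R C_R_NormedModule h (Rbar_locally m_infty) (locally l) ->
  forall eps, 0 < eps -> exists M, forall x, x < M -> Cmod (Cminus (h x) l) < eps.
Proof.
  intros H eps He.
  destruct (H (ball l (eps / 2)) (locally_ball l (mkposreal (eps / 2) ltac:(lra)))) as [M HM].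
  exists M. intros x Hx. specialize (HM x Hx). apply ball_Cmod in HM. simpl in HM. lra.
Qed.

Theorem theorem1 (f : C -> C) (U : C -> Prop) (S : list C) :
  (* U is an open neighbourhood of the closed upper half-plane *)
  open U ->
  (forall z : C, 0 <= Im z -> U z) ->
  (* finitely many (distinct) isolated singular points, all with Im > 0 *)
  NoDup S ->
  (forall s : C, In s S -> 0 < Im s) ->
  (* f is holomorphic on U minus the singular points *)
  (forall z : C, U z -> ~ In z S -> holo_at f z) ->
  (* (i) *)
  (exists (M : R) (V : R -> C),
      (forall x : R, M < Rabs x ->
         @is_RInt_gen C_R_NormedModule (fun y : R => f (x, y))
           (at_point 0) (Rbar_locally p_infty) (V x)) /\
      filterlim V (Rbar_locally p_infty) (locally (RtoC 0)) /\
      filterlim V (Rbar_locally m_infty) (locally (RtoC 0))) ->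
  (* (ii) *)
  (forall a b : R, a <= b ->
      filterlim (fun y : R => @RInt C_R_CompleteNormedModule
                                 (fun x : R => f (x, y)) a b)
        (Rbar_locally p_infty) (locally (RtoC 0))) ->
  @is_RInt_gen C_R_NormedModule (fun x : R => f (RtoC x))
    (Rbar_locally m_infty) (Rbar_locally p_infty)
    (Cmult (Cmult (RtoC (2 * PI)) Ci) (Csum (map (residue f) S))).
Proof.
  intros HU HUH HND HS Hholo [M [V [HV [HVp HVm]]]] Hii.
  set (Sig := Csum (map (residue f) S)).
  change (Cmult (RtoC (2 * PI)) Ci) with TPI.
  assert (Hh : forall x y, 0 <= y -> ~ In (x, y) S -> hol f (x, y)).
  { intros x y Hy Hn. apply holo_Cder. apply Hholo; auto; try (apply HUH; exact Hy). }
  destruct (list_bound S) as [K [HK HKs]].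
  set (K0 := Rmax K (Rabs M) + 1).
  assert (HK0 : K <= K0 - 1 /\ Rabs M <= K0 - 1) by (unfold K0; assert (X1 := Rmax_l K (Rabs M)); assert (X2 := Rmax_r K (Rabs M)); lra).
  assert (HMa : forall a, a < - K0 -> M < Rabs a).
  { intros a Ha. rewrite Rabs_left by lra. assert (X := Rle_abs M). lra. }
  assert (HMb : forall b, K0 < b -> M < Rabs b).
  { intros b Hb. rewrite Rabs_right by lra. assert (X := Rle_abs M). lra. }
  assert (Key : forall a b, a < - K0 -> K0 < b ->
     IH f a b 0 = Cplus (Cminus (Cmult TPI Sig) (Cmult Ci (V b))) (Cmult Ci (V a))).
  { intros a b Ha Hb.
    set (D := Cminus (IH f a b 0) (Cplus (Cminus (Cmult TPI Sig) (Cmult Ci (V b))) (Cmult Ci (V a)))).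
    enough (HD : D = RtoC 0).
    { unfold D in HD. replace (IH f a b 0) with (Cplus (Cminus (IH f a b 0) (Cplus (Cminus (Cmult TPI Sig) (Cmult Ci (V b))) (Cmult Ci (V a))))
        (Cplus (Cminus (Cmult TPI Sig) (Cmult Ci (V b))) (Cmult Ci (V a)))) by ring. rewrite HD. ring. }
    apply Cmod_eq_0. apply Rle_antisym; [|apply Cmod_ge_0]. apply Rnot_lt_le. intros Hp.
    set (eps := Cmod D). assert (Heps3 : 0 < eps / 3) by (unfold eps; lra).
    destruct (extract_gen _ _ (HV b (HMb b Hb)) (eps / 3) Heps3) as [Mb' HMb'].
    destruct (extract_gen _ _ (HV a (HMa a Ha)) (eps / 3) Heps3) as [Ma' HMa'].
    destruct (extract_p _ _ (Hii a b ltac:(lra)) (eps / 3) Heps3) as [My HMy].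
    set (Y := Rmax (Rmax Mb' Ma') (Rmax My K) + 1).
    assert (HY : Mb' < Y /\ Ma' < Y /\ My < Y /\ K < Y).
    { unfold Y. assert (X1 := Rmax_l (Rmax Mb' Ma') (Rmax My K)). assert (X2 := Rmax_r (Rmax Mb' Ma') (Rmax My K)).
      assert (X3 := Rmax_l Mb' Ma'). assert (X4 := Rmax_r Mb' Ma'). assert (X5 := Rmax_l My K). assert (X6 := Rmax_r My K).
      lra. }
    assert (HR : rect f a b 0 Y = Cmult TPI Sig).
    { apply (multi_pt_n (length S) f S a b 0 Y (Nat.le_refl _) ltac:(lra) ltac:(lra) HND).
      - intros s Hs. destruct (HKs s Hs) as [X1 X2]. assert (X3 := HS s Hs).
        apply Rabs_lt_between in X1. apply Rabs_lt_between in X2. unfold Im in X3. lra.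
      - intros x y Hx Hy Hn. apply Hh; auto; lra. }
    specialize (HMb' Y ltac:(lra)). specialize (HMa' Y ltac:(lra)). specialize (HMy Y ltac:(lra)).
    unfold rect, IV, IH in HR. unfold IH in HMy.
    set (Ib := @RInt C_R_CompleteNormedModule (fun y => f (b, y)) 0 Y) in *.
    set (Ia := @RInt C_R_CompleteNormedModule (fun y => f (a, y)) 0 Y) in *.
    set (IY := @RInt C_R_CompleteNormedModule (fun x => f (x, Y)) a b) in *.
    assert (ED : D = Cplus (Cplus (Cmult (Copp Ci) (Cminus Ib (V b))) (Cminus IY (RtoC 0))) (Cmult Ci (Cminus Ia (V a)))).
    { unfold D, IH. rewrite <- HR. ring. }
    assert (Cmod D < eps).
    { rewrite ED. eapply Rle_lt_trans; [apply Cmod_triangle|].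
      eapply Rle_lt_trans; [apply Rplus_le_compat_r, Cmod_triangle|].
      rewrite !Cmod_mult, Cmod_opp, Cmod_Ci. lra. }
    unfold eps in *. lra. }
  intros P [eps HP].
  destruct (extract_m V (RtoC 0) HVm (eps / 2) ltac:(destruct eps; simpl; lra)) as [Ma HMa'].
  destruct (extract_p V (RtoC 0) HVp (eps / 2) ltac:(destruct eps; simpl; lra)) as [Mb HMb'].
  apply (Filter_prod _ _ _ (fun a => a < Rmin (- K0) Ma) (fun b => Rmax K0 Mb < b)).
  - exists (Rmin (- K0) Ma). auto.
  - exists (Rmax K0 Mb). auto.
  - intros a b Ha Hb.
    assert (Ha1 : a < - K0) by (eapply Rlt_le_trans; [apply Ha|apply Rmin_l]).
    assert (Ha2 : a < Ma) by (eapply Rlt_le_trans; [apply Ha|apply Rmin_r]).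
    assert (Hb1 : K0 < b) by (eapply Rle_lt_trans; [apply Rmax_l|apply Hb]).
    assert (Hb2 : Mb < b) by (eapply Rle_lt_trans; [apply Rmax_r|apply Hb]).
    exists (IH f a b 0). split.
    + simpl. apply (RInt_correct (V:=C_R_CompleteNormedModule)).
      apply exh; [lra|]. intros x Hx. apply hol_cont, Hh; [lra|].
      intros Hin. assert (X := HS _ Hin). unfold Im in X. simpl in X. lra.
    + apply HP. apply ballCR_of_Cmod. rewrite Key by auto.
      specialize (HMa' a Ha2). specialize (HMb' b Hb2).
      replace (Cminus (Cplus (Cminus (Cmult TPI Sig) (Cmult Ci (V b))) (Cmult Ci (V a))) (Cmult TPI Sig))
        with (Cplus (Cmult (Copp Ci) (Cminus (V b) (RtoC 0))) (Cmult Ci (Cminus (V a) (RtoC 0)))) by ring.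
      eapply Rle_lt_trans; [apply Cmod_triangle|]. rewrite !Cmod_mult, Cmod_opp, Cmod_Ci. lra.
Qed.
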